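(* Let $P_{XY}$ be a probability measure on $\mathbb{R}^2$ with marginals $P_X,P_Y$, let $P_Z$ be a probability measure on $\mathbb{R}$, and for each $n$ let $Z^n=(Z_1,\dots,Z_n)$ be i.i.d. $P_Z$. If $D(P_{XY}\|P_ZP_Y)<\infty$, then for each $\delta>0$ there exists $\epsilon(\delta)>0$ such that for every $0<\epsilon<\epsilon(\delta)$ and every sequence $(y^{(n)})_{n\ge1}$ with $y^{(n)}\in A_\epsilon^n(P_Y)$ for all $n$, $$\limsup_{n\to\infty}\frac1n\log P_Z^n\big((Z^n,y^{(n)})\in A_\epsilon^n(P_{XY})\big)\le -D(P_{XY}\|P_ZP_Y)+\delta.$$
   Context: Prokhorov distance on probability measures on $\mathbb{R}^d$: $\pi_d(P_1,P_2)=\inf\{\epsilon>0: P_1(A)<P_2(A^\epsilon)+\epsilon\text{ and }P_2(A)<P_1(A^\epsilon)+\epsilon\ \forall\text{ Borel }A\}$, where $A^\epsilon=\{x:\exists y\in A,\|x-y\|<\epsilon\}$. For $x\in\mathbb{R}^n$ the empirical measure is $\bar P_x(A)=\frac1n\sum_i\mathbb{1}\{x_i\in A\}$, and for a pair $(x,y)$, $\bar P_{xy}(A\times B)=\frac1n\sum_i\mathbb{1}\{x_i\in A,y_i\in B\}$. $A_\epsilon^n(P_Y)=\{y\in\mathbb{R}^n:\pi_1(\bar P_y,P_Y)<\epsilon\}$ and $A_\epsilon^n(P_{XY})=\{(x,y):\pi_2(\bar P_{xy},P_{XY})<\epsilon\}$ (weak* typicality). The divergence between general measures is $D(P\|Q)=\sup_{\mathcal{Q}}D(P_{\mathcal{Q}}\|Q_{\mathcal{Q}})$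 over finite measurable partitions $\mathcal{Q}$; $P_ZP_Y$ denotes the product measure. *)

(* Defs.v *)
From Stdlib Require Import Reals Lra Classical ClassicalEpsilon.
Open Scope R_scope.

Definition set (T : Type) := T -> Prop.

Definition is_sigma_algebra {T : Type} (F : set T -> Prop) : Prop :=
  F (fun _ => True) /\
  (forall A, F A -> F (fun x => ~ A x)) /\
  (forall A : nat -> set T, (forall k, F (A k)) -> F (fun x => exists k, A k x)).

Definition metric_open {T : Type} (d : T -> T -> R) (U : set T) : Prop :=
  forall x, U x -> exists r, 0 < r /\ forall y, d x y < r -> U y.

Definition borel {T : Type} (d : T -> T -> R) (A : set T) : Prop :=
  forall F : set T -> Prop, is_sigma_algebra F ->
    (forall U, metric_open d U -> F U) -> F A.

Definition dist1 (x y : R) : R := Rabs (x - y).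
Definition dist2 (p q : R * R) : R :=
  sqrt ((fst p - fst q) ^ 2 + (snd p - snd q) ^ 2).

Definition borel1 := @borel R dist1.
Definition borel2 := @borel (R * R) dist2.

Definition is_probability {T : Type} (M : set T -> Prop) (mu : set T -> R) : Prop :=
  (forall A, M A -> 0 <= mu A) /\
  mu (fun _ => True) = 1 /\
  (forall A : nat -> set T, (forall k, M (A k)) ->
     (forall i j x, i <> j -> A i x -> A j x -> False) ->
     Un_cv (fun N => sum_f_R0 (fun k => mu (A k)) N) (mu (fun x => exists k, A k x))).

Fixpoint rsum (f : nat -> R) (n : nat) : R :=
  match n with O => 0 | S k => rsum f k + f k end.
Fixpoint rprod (f : nat -> R) (n : nat) : R :=
  match n with O => 1 | S k => rprod f k * f k end.

Definition ind {T : Type} (A : set T) (x : T) : R :=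
  if excluded_middle_informative (A x) then 1 else 0.

Definition empirical {T : Type} (n : nat) (pts : nat -> T) (A : set T) : R :=
  / INR n * rsum (fun i => ind A (pts i)) n.

Definition enlarge {T : Type} (d : T -> T -> R) (A : set T) (eps : R) : set T :=
  fun x => exists y, A y /\ d x y < eps.

Definition prokhorov_ok {T : Type} (d : T -> T -> R) (P1 P2 : set T -> R) (eps : R) : Prop :=
  0 < eps /\
  forall A, borel d A ->
    P1 A < P2 (enlarge d A eps) + eps /\ P2 A < P1 (enlarge d A eps) + eps.

Definition is_glb (S : R -> Prop) (m : R) : Prop :=
  (forall x, S x -> m <= x) /\ (forall m', (forall x, S x -> m' <= x) -> m' <= m).

(** pi_d(P1,P2) < eps, where pi_d is the infimum of admissible eps. *)
Definition prokhorov_lt {T : Type} (d : T -> T -> R) (P1 P2 : set T -> R) (eps : R) : Prop :=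
  exists m, is_glb (prokhorov_ok d P1 P2) m /\ m < eps.

Definition typical_Y (PY : set R -> R) (eps : R) (n : nat) (y : nat -> R) : Prop :=
  prokhorov_lt dist1 (empirical n y) PY eps.
Definition typical_XY (PXY : set (R * R) -> R) (eps : R) (n : nat)
  (x y : nat -> R) : Prop :=
  prokhorov_lt dist2 (empirical n (fun i => (x i, y i))) PXY eps.

Definition is_partition {T : Type} (M : set T -> Prop) (parts : list (set T)) : Prop :=
  (forall A, List.In A parts -> M A) /\
  (forall x, exists i, (i < length parts)%nat /\ List.nth i parts (fun _ => False) x) /\
  (forall i j x, (i < length parts)%nat -> (j < length parts)%nat -> i <> j ->
     List.nth i parts (fun _ => False) x -> List.nth j parts (fun _ => False) x -> False).

(** p log (p/q), with 0 log(0/q) = 0 (used only when q > 0 or p = 0) *)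
Definition div_term (p q : R) : R := if Req_EM_T p 0 then 0 else p * ln (p / q).

Definition partition_div {T : Type} (P Q : set T -> R) (parts : list (set T)) : R :=
  List.fold_right (fun A s => div_term (P A) (Q A) + s) 0 parts.

(** [divergence_is M P Q D] : D(P||Q) is finite and equals D.
    Finiteness includes: no partition cell has P(A) > 0 = Q(A)
    (such a cell would contribute +infinity). *)
Definition divergence_is {T : Type} (M : set T -> Prop) (P Q : set T -> R) (D : R) : Prop :=
  (forall parts, is_partition M parts ->
     forall A, List.In A parts -> 0 < P A -> 0 < Q A) /\
  is_lub (fun s => exists parts, is_partition M parts /\ s = partition_div P Q parts) D.

(** limsup_n (1/n) log p_n <= L, with log 0 = -infinity. *)
Definition log_rate_limsup_le (p : nat -> R) (L : R) : Prop :=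
  forall eta, 0 < eta -> exists N, forall n, (N <= n)%nat -> (1 <= n)%nat ->
    p n = 0 \/ ln (p n) / INR n <= L + eta.

(* Main.v *)
Require Import Defs.
From Stdlib Require Import Reals Classical ClassicalEpsilon.
From Stdlib Require Import Lra Lia FunctionalExtensionality PropExtensionality Rgeom ZArith List.
Require Import Defs.
Open Scope R_scope.


Lemma set_ext {T : Type} (A B : set T) : (forall x, A x <-> B x) -> A = B.
Proof. intros H; apply functional_extensionality; intros x; apply propositional_extensionality; auto. Qed.

Lemma rsum_S f n : rsum f (S n) = rsum f n + f n. Proof. reflexivity. Qed.

Lemma sum_f_rsum f N : sum_f_R0 f N = rsum f (S N).
Proof. induction N; simpl in *. lra. rewrite IHN; simpl; lra. Qed.

Lemma rsum_ext f g n : (forall k, (k < n)%nat -> f k = g k) -> rsum f n = rsum g n.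
Proof. induction n; intros H; simpl; auto. rewrite IHn, H; auto; intros; apply H; lia. Qed.

Lemma rsum_le f g n : (forall k, (k < n)%nat -> f k <= g k) -> rsum f n <= rsum g n.
Proof. induction n; intros H; simpl. lra. assert (f n <= g n) by (apply H; lia).
 assert (rsum f n <= rsum g n) by (apply IHn; intros; apply H; lia). lra. Qed.

Lemma rsum_plus f g n : rsum (fun k => f k + g k) n = rsum f n + rsum g n.
Proof. induction n; simpl; lra. Qed.

Lemma rsum_scal c f n : rsum (fun k => c * f k) n = c * rsum f n.
Proof. induction n; simpl; try rewrite IHn; lra. Qed.

Lemma rsum_minus f g n : rsum (fun k => f k - g k) n = rsum f n - rsum g n.
Proof. induction n; simpl; lra. Qed.

Lemma rsum_const c n : rsum (fun _ => c) n = INR n * c.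
Proof. induction n; simpl rsum; [simpl; lra|]. rewrite IHn, S_INR; lra. Qed.

Lemma rsum_nonneg f n : (forall k, (k < n)%nat -> 0 <= f k) -> 0 <= rsum f n.
Proof. intros H. replace 0 with (rsum (fun _ => 0) n). apply rsum_le; auto.
 rewrite rsum_const; lra. Qed.

Lemma rsum_swap (f : nat -> nat -> R) n m :
  rsum (fun i => rsum (fun j => f i j) m) n = rsum (fun j => rsum (fun i => f i j) n) m.
Proof. induction n; simpl. rewrite rsum_const; simpl; lra.
 rewrite IHn, <- rsum_plus; reflexivity. Qed.

Lemma rsum_abs f n : Rabs (rsum f n) <= rsum (fun k => Rabs (f k)) n.
Proof. induction n; simpl. rewrite Rabs_R0; lra.
 eapply Rle_trans. apply Rabs_triang. lra. Qed.

Lemma rsum_single f n k0 : (k0 < n)%nat -> (forall k, (k < n)%nat -> k <> k0 -> f k = 0) ->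
  rsum f n = f k0.
Proof. induction n; intros Hk H. lia. simpl.
 destruct (Nat.eq_dec k0 n). subst. rewrite (rsum_ext f (fun _ => 0)). rewrite rsum_const; lra.
 intros; apply H; lia.
 assert (Hn : f n = 0) by (apply H; lia). rewrite Hn, IHn. lra. lia. intros; apply H; lia. Qed.

Lemma mext {T : Type} (mu : set T -> R) A B : (forall x, A x <-> B x) -> mu A = mu B.
Proof. intros H; rewrite (set_ext A B H); auto. Qed.

Section Sigma.
Context {T : Type} (M : set T -> Prop) (HM : is_sigma_algebra M).

Lemma sa_T : M (fun _ => True). Proof using HM. apply HM. Qed.
Lemma sa_compl A : M A -> M (fun x => ~ A x). Proof using HM. apply HM. Qed.
Lemma sa_cup (A : nat -> set T) : (forall k, M (A k)) -> M (fun x => exists k, A k x).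
Proof using HM. apply HM. Qed.
Lemma sa_ext A B : (forall x, A x <-> B x) -> M A -> M B.
Proof using HM. intros H; rewrite (set_ext A B H); auto. Qed.
Lemma sa_empty : M (fun _ => False).
Proof using HM. apply (sa_ext (fun x => ~ True)). tauto. apply sa_compl, sa_T. Qed.
Lemma sa_const (P : Prop) : M (fun _ => P).
Proof using HM. destruct (classic P). apply (sa_ext (fun _ => True)). tauto. apply sa_T.
 apply (sa_ext (fun _ => False)). tauto. apply sa_empty. Qed.
Lemma sa_union A B : M A -> M B -> M (fun x => A x \/ B x).
Proof using HM. intros HA HB. apply (sa_ext (fun x => exists k, (if Nat.eq_dec k 0 then A else B) x)).
 intros x; split. intros [k Hk]; destruct (Nat.eq_dec k 0); auto.
 intros [H|H]. exists 0%nat; auto. exists 1%nat; auto.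
 apply sa_cup; intros k; destruct (Nat.eq_dec k 0); auto. Qed.
Lemma sa_inter A B : M A -> M B -> M (fun x => A x /\ B x).
Proof using HM. intros HA HB. apply (sa_ext (fun x => ~ (~ A x \/ ~ B x))).
 intros x; tauto. apply sa_compl, sa_union; apply sa_compl; auto. Qed.
Lemma sa_diff A B : M A -> M B -> M (fun x => A x /\ ~ B x).
Proof using HM. intros; apply sa_inter; auto; apply sa_compl; auto. Qed.
Lemma sa_capc (A : nat -> set T) : (forall k, M (A k)) -> M (fun x => forall k, A k x).
Proof using HM. intros H. apply (sa_ext (fun x => ~ exists k, ~ A k x)).
 intros x; split. intros H1 k; apply NNPP; intros H2; apply H1; eauto. intros H1 [k Hk]; auto.
 apply sa_compl, sa_cup; intros k; apply sa_compl; auto. Qed.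
Lemma sa_fincup (A : nat -> set T) n : (forall k, (k < n)%nat -> M (A k)) ->
  M (fun x => exists k, (k < n)%nat /\ A k x).
Proof using HM. intros H. apply (sa_ext (fun x => exists k, (fun k x => (k < n)%nat /\ A k x) k x)).
 tauto. apply sa_cup. intros k. destruct (Compare_dec.lt_dec k n).
 apply (sa_ext (A k)). intros; tauto. auto.
 apply (sa_ext (fun _ => False)). intros; tauto. apply sa_empty. Qed.
Lemma sa_fincap (A : nat -> set T) n : (forall k, (k < n)%nat -> M (A k)) ->
  M (fun x => forall k, (k < n)%nat -> A k x).
Proof using HM. intros H. apply (sa_ext (fun x => forall k, (fun k x => (k < n)%nat -> A k x) k x)).
 tauto. apply sa_capc. intros k. destruct (Compare_dec.lt_dec k n).
 apply (sa_ext (A k)). intros; tauto. auto.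
 apply (sa_ext (fun _ => True)). intros; split; auto; lia. apply sa_T. Qed.
End Sigma.
Arguments sa_T {T M} HM.
Arguments sa_compl {T M} HM.
Arguments sa_cup {T M} HM.
Arguments sa_ext {T M} HM.
Arguments sa_empty {T M} HM.
Arguments sa_const {T M} HM.
Arguments sa_union {T M} HM.
Arguments sa_inter {T M} HM.
Arguments sa_diff {T M} HM.
Arguments sa_capc {T M} HM.
Arguments sa_fincup {T M} HM.
Arguments sa_fincap {T M} HM.


Section Meas.
Context {T : Type} (M : set T -> Prop) (HM : is_sigma_algebra M) (mu : set T -> R)
  (Hmu : is_probability M mu).

Lemma m_nonneg A : M A -> 0 <= mu A. Proof using HM Hmu. apply Hmu. Qed.
Lemma m_T : mu (fun _ => True) = 1. Proof using HM Hmu. apply Hmu. Qed.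

Lemma m_ext A B : (forall x, A x <-> B x) -> mu A = mu B.
Proof using HM Hmu. intros H; rewrite (set_ext A B H); auto. Qed.

Lemma m_empty : mu (fun _ => False) = 0.
Proof using HM Hmu. destruct Hmu as [_ [_ H]].
 specialize (H (fun _ => fun _ => False)). simpl in H.
 assert (Hc : Un_cv (fun N => sum_f_R0 (fun _ => mu (fun _ => False)) N) (mu (fun _ => False))).
 { assert (E : (fun _ : T => exists _ : nat, False) = (fun _ => False)) by (apply set_ext; intros x; split; [intros [_ F]|]; tauto).
   rewrite E in H. apply H. intros; apply sa_empty; auto. intros; tauto. }
 set (c := mu (fun _ => False)) in *. destruct (Req_dec c 0) as [|Hne]; auto. exfalso. assert (Hp : 0 < Rabs c) by (apply Rabs_pos_lt; auto).
 destruct (Hc (Rabs c / 2)) as [N HN]. lra.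
 assert (A1 := HN (S N) ltac:(lia)). assert (A2 := HN N ltac:(lia)).
 simpl in A1. rewrite R_dist_sym in A2.
 unfold R_dist in *.
 assert (Rabs (sum_f_R0 (fun _ : nat => c) N + c - sum_f_R0 (fun _ : nat => c) N) <=
   Rabs (sum_f_R0 (fun _ : nat => c) N + c - c) + Rabs (c - sum_f_R0 (fun _ : nat => c) N)).
 { replace (sum_f_R0 (fun _ : nat => c) N + c - sum_f_R0 (fun _ : nat => c) N) with
   ((sum_f_R0 (fun _ : nat => c) N + c - c) + (c - sum_f_R0 (fun _ : nat => c) N)) by ring.
   apply Rabs_triang. }
 replace (sum_f_R0 (fun _ : nat => c) N + c - sum_f_R0 (fun _ : nat => c) N) with c in H0 by ring.
 lra. Qed.

Lemma m_finadd (A : nat -> set T) n : (forall k, (k < n)%nat -> M (A k)) ->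
  (forall i j x, (i < n)%nat -> (j < n)%nat -> i <> j -> A i x -> A j x -> False) ->
  mu (fun x => exists k, (k < n)%nat /\ A k x) = rsum (fun k => mu (A k)) n.
Proof using HM Hmu. intros HA Hd. destruct Hmu as [_ [_ H]].
 set (B := fun k x => (k < n)%nat /\ A k x).
 specialize (H B). 
 assert (HB : forall k, M (B k)).
 { intros k; unfold B; destruct (Compare_dec.lt_dec k n). apply (sa_ext HM (A k)). intros; tauto. auto.
   apply (sa_ext HM (fun _ => False)). intros; tauto. apply sa_empty; auto. }
 assert (Hc := H HB ltac:(unfold B; intros i j x Hij [Hi Ai] [Hj Aj]; eapply Hd; eauto)).
 assert (Hc2 : Un_cv (fun N => sum_f_R0 (fun k => mu (B k)) N) (rsum (fun k => mu (A k)) n)).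
 { intros e He; exists n; intros N HN. rewrite sum_f_rsum. unfold R_dist.
   replace (rsum (fun k : nat => mu (B k)) (S N)) with (rsum (fun k => mu (A k)) n). rewrite Rminus_diag, Rabs_R0; auto.
   assert (forall p, rsum (fun k : nat => mu (B k)) (n + p) = rsum (fun k => mu (A k)) n).
   { induction p. rewrite Nat.add_0_r. apply rsum_ext. intros k Hk; unfold B; apply m_ext; intros; tauto.
     rewrite Nat.add_succ_r; simpl; rewrite IHp. replace (mu (B (n+p)%nat)) with 0. ring.
     rewrite <- m_empty. apply m_ext; unfold B; intros; split; [tauto|intros [Hl _]; lia]. }
   replace (S N) with (n + (S N - n))%nat by lia. auto. }
 rewrite <- (UL_sequence _ _ _ Hc Hc2). apply m_ext. unfold B; intros x; split; intros [k Hk]; eauto. Qed.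

Lemma m_add2 A B : M A -> M B -> (forall x, A x -> B x -> False) ->
  mu (fun x => A x \/ B x) = mu A + mu B.
Proof using HM Hmu. intros HA HB Hd.
 replace (mu A + mu B) with (rsum (fun k => mu ((fun k => if Nat.eq_dec k 0 then A else B) k)) 2) by (simpl; ring).
 rewrite <- m_finadd. apply m_ext. intros x; split.
 intros [Ha|Hb]. exists 0%nat; split; auto; lia. exists 1%nat; split; auto; lia.
 intros [k [Hk Hx]]. destruct (Nat.eq_dec k 0); auto.
 intros k _; destruct (Nat.eq_dec k 0); auto.
 intros i j x Hi Hj Hij. destruct (Nat.eq_dec i 0), (Nat.eq_dec j 0); try lia; eauto.
 Qed.

Lemma m_mono A B : M A -> M B -> (forall x, A x -> B x) -> mu A <= mu B.
Proof using HM Hmu. intros HA HB H. rewrite (m_ext B (fun x => A x \/ (B x /\ ~ A x))).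
 rewrite m_add2; auto. assert (0 <= mu (fun x => B x /\ ~ A x)). apply m_nonneg. apply sa_diff; auto. lra.
 apply sa_diff; auto. firstorder. intros x; split; [|firstorder]. intros; destruct (classic (A x)); tauto. Qed.

Lemma m_le1 A : M A -> mu A <= 1.
Proof using HM Hmu. intros; rewrite <- m_T; apply m_mono; auto. apply sa_T; auto. Qed.

Lemma m_compl A : M A -> mu (fun x => ~ A x) = 1 - mu A.
Proof using HM Hmu. intros HA. rewrite <- m_T. rewrite (m_ext (fun _ => True) (fun x => A x \/ ~ A x)).
 rewrite m_add2; auto. ring. apply sa_compl; auto. all: intros x; tauto. Qed.

Lemma m_diff A B : M A -> M B -> (forall x, B x -> A x) -> mu (fun x => A x /\ ~ B x) = mu A - mu B.
Proof using HM Hmu. intros HA HB H. assert (E : mu A = mu (fun x => B x \/ (A x /\ ~ B x))). 2: {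
 rewrite E, m_add2; auto. ring. apply sa_diff; auto. firstorder. }
 apply m_ext. intros x; split; [|intros [?|?]; firstorder].
 intros; destruct (classic (B x)); tauto. Qed.

Lemma m_sub2 A B : M A -> M B -> mu (fun x => A x \/ B x) <= mu A + mu B.
Proof using HM Hmu. intros HA HB. rewrite (m_ext _ (fun x => A x \/ (B x /\ ~ A x))).
 rewrite m_add2; auto. assert (mu (fun x => B x /\ ~ A x) <= mu B). apply m_mono; auto. apply sa_diff; auto. tauto.
 lra. apply sa_diff; auto. firstorder. intros x; split; [|firstorder]. intros; destruct (classic (A x)); tauto. Qed.

Lemma m_finsub (A : nat -> set T) n : (forall k, (k < n)%nat -> M (A k)) ->
  mu (fun x => exists k, (k < n)%nat /\ A k x) <= rsum (fun k => mu (A k)) n.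
Proof using HM Hmu. induction n; intros HA. simpl. rewrite (m_ext _ (fun _ => False)). rewrite m_empty; lra.
 intros x; split; [intros [k [Hk _]]; lia|tauto].
 rewrite (m_ext _ (fun x => (exists k, (k < n)%nat /\ A k x) \/ A n x)).
 simpl. assert (M (fun x => exists k, (k < n)%nat /\ A k x)) by (apply sa_fincup; auto; intros; apply HA; lia).
 assert (M (A n)) by (apply HA; lia).
 eapply Rle_trans. apply m_sub2; auto.
 assert (mu (fun x => exists k, (k < n)%nat /\ A k x) <= rsum (fun k => mu (A k)) n). apply IHn; intros; apply HA; lia. lra.
 intros x; split. intros [k [Hk Ak]]. destruct (Nat.eq_dec k n). subst; auto. left; exists k; split; auto; lia.
 intros [[k [Hk Ak]]|H]. exists k; split; auto. exists n; split; auto. Qed.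

Lemma m_cont_below (Sq : nat -> set T) : (forall k, M (Sq k)) -> (forall k x, Sq k x -> Sq (S k) x) ->
  Un_cv (fun k => mu (Sq k)) (mu (fun x => exists k, Sq k x)).
Proof using HM Hmu. intros HS Hinc. destruct Hmu as [_ [_ H]].
 set (Dd := fun k x => match k with O => Sq O x | S k' => Sq (S k') x /\ ~ Sq k' x end).
 assert (HD : forall k, M (Dd k)). { intros [|k]; unfold Dd; auto. apply (sa_diff HM (Sq (S k)) (Sq k)); auto. }
 assert (Hmono : forall i j x, (i <= j)%nat -> Sq i x -> Sq j x).
 { intros i j x Hij; induction Hij; auto. }
 assert (Hdis : forall i j x, i <> j -> Dd i x -> Dd j x -> False).
 { intros i j x Hij. assert (forall i j, (i < j)%nat -> Dd i x -> Dd j x -> False).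
   { intros i' j' Hl Hi Hj. destruct j'. lia. simpl in Hj. destruct Hj as [_ Hj]. apply Hj.
     apply (Hmono i'). lia. destruct i'; simpl in Hi; tauto. }
   destruct (Compare_dec.lt_dec i j). eauto. intros; eapply (H0 j i); eauto; lia. }
 specialize (H Dd HD Hdis).
 assert (Hs : forall N, sum_f_R0 (fun k => mu (Dd k)) N = mu (Sq N)).
 { induction N. simpl; auto. simpl. rewrite IHN. unfold Dd. rewrite (m_diff (Sq (S N)) (Sq N)); auto. ring. }
 assert (Hu : (fun x => exists k, Dd k x) = (fun x => exists k, Sq k x)).
 { apply set_ext; intros x; split. intros [k Hk]; destruct k; simpl in Hk; [exists O|exists (S k)]; tauto.
   intros [k Hk]. induction k. exists O; auto. destruct (classic (Sq k x)). auto. exists (S k); simpl; tauto. }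
 rewrite Hu in H. intros e He; destruct (H e He) as [N HN]; exists N; intros n Hn.
 rewrite <- Hs; auto. Qed.

End Meas.
Arguments m_nonneg {T M} HM {mu} Hmu.
Arguments m_T {T M} HM {mu} Hmu.
Arguments m_ext {T M} HM {mu} Hmu.
Arguments m_empty {T M} HM {mu} Hmu.
Arguments m_finadd {T M} HM {mu} Hmu.
Arguments m_add2 {T M} HM {mu} Hmu.
Arguments m_mono {T M} HM {mu} Hmu.
Arguments m_le1 {T M} HM {mu} Hmu.
Arguments m_compl {T M} HM {mu} Hmu.
Arguments m_diff {T M} HM {mu} Hmu.
Arguments m_sub2 {T M} HM {mu} Hmu.
Arguments m_finsub {T M} HM {mu} Hmu.
Arguments m_cont_below {T M} HM {mu} Hmu.



Lemma borel_sa {T} (d : T -> T -> R) : is_sigma_algebra (borel d).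
Proof. split; [|split].
 - intros F HF _; apply HF.
 - intros A HA F HF HU; apply HF; apply HA; auto.
 - intros A HA F HF HU; apply HF; intros k; apply HA; auto. Qed.

Lemma open_borel {T} (d : T -> T -> R) U : metric_open d U -> borel d U.
Proof. intros HU F HF HO; auto. Qed.

Lemma borel_ind {T} (d : T -> T -> R) (G : set T -> Prop) :
  is_sigma_algebra G -> (forall U, metric_open d U -> G U) -> forall A, borel d A -> G A.
Proof. intros HG HO A HA; apply HA; auto. Qed.

Lemma dist2_fst p q : Rabs (fst p - fst q) <= dist2 p q.
Proof. unfold dist2. rewrite <- sqrt_Rsqr_abs. apply sqrt_le_1_alt.
 unfold Rsqr. assert (H := pow2_ge_0 (snd p - snd q)).
 replace ((fst p - fst q)^2) with ((fst p - fst q)*(fst p - fst q)) by ring; lra. Qed.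
Lemma dist2_snd p q : Rabs (snd p - snd q) <= dist2 p q.
Proof. unfold dist2. rewrite <- sqrt_Rsqr_abs. apply sqrt_le_1_alt.
 unfold Rsqr. assert (H := pow2_ge_0 (fst p - fst q)).
 replace ((snd p - snd q)^2) with ((snd p - snd q)*(snd p - snd q)) by ring; lra. Qed.
Lemma dist2_le_sum p q : dist2 p q <= Rabs (fst p - fst q) + Rabs (snd p - snd q).
Proof. unfold dist2. rewrite <- (sqrt_Rsqr (Rabs (fst p - fst q) + Rabs (snd p - snd q))).
 apply sqrt_le_1_alt. unfold Rsqr.
 assert (H1 := Rabs_pos (fst p - fst q)). assert (H2 := Rabs_pos (snd p - snd q)).
 rewrite <- (pow2_abs (fst p - fst q)), <- (pow2_abs (snd p - snd q)). nra.
 assert (H1 := Rabs_pos (fst p - fst q)). assert (H2 := Rabs_pos (snd p - snd q)). lra. Qed.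
Lemma dist2_sym p q : dist2 p q = dist2 q p.
Proof. unfold dist2. f_equal. ring. Qed.
Lemma dist2_nonneg p q : 0 <= dist2 p q.
Proof. unfold dist2. apply sqrt_pos. Qed.
Lemma dist2_tri p q r : dist2 p q <= dist2 p r + dist2 r q.
Proof. destruct p as [a b], q as [c d], r as [e f]. unfold dist2, fst, snd.
 assert (H := triangle a b c d e f). unfold dist_euc, Rsqr in H.
 replace ((a - c) ^ 2 + (b - d) ^ 2) with ((a - c) * (a - c) + (b - d) * (b - d)) by ring.
 replace ((a - e) ^ 2 + (b - f) ^ 2) with ((a - e) * (a - e) + (b - f) * (b - f)) by ring.
 replace ((e - c) ^ 2 + (f - d) ^ 2) with ((e - c) * (e - c) + (f - d) * (f - d)) by ring. exact H. Qed.
Lemma dist2_same_snd x x' y : dist2 (x, y) (x', y) = Rabs (x - x').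
Proof. unfold dist2, fst, snd. replace ((x - x') ^ 2 + (y - y) ^ 2) with (Rsqr (x - x')) by (unfold Rsqr; ring).
 apply sqrt_Rsqr_abs. Qed.

Lemma dist1_tri x y z : dist1 x y <= dist1 x z + dist1 z y.
Proof. unfold dist1. replace (x - y) with ((x - z) + (z - y)) by ring. apply Rabs_triang. Qed.

Lemma enlarge_open2 A e : metric_open dist2 (enlarge dist2 A e).
Proof. intros x [y [Hy Hd]]. exists (e - dist2 x y); split. lra.
 intros z Hz. exists y; split; auto. assert (H := dist2_tri z y x). rewrite (dist2_sym z x) in H. lra. Qed.

Lemma enlarge_borel2 A e : borel2 (enlarge dist2 A e).
Proof. apply open_borel, enlarge_open2. Qed.

Lemma borel1_lt c : borel1 (fun x => x < c).
Proof. apply open_borel. intros x Hx. exists (c - x); split. lra. intros y Hy. unfold dist1 in Hy.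
 assert (H := Rle_abs (y - x)). rewrite Rabs_minus_sym in Hy. lra. Qed.
Lemma borel1_gt c : borel1 (fun x => c < x).
Proof. apply open_borel. intros x Hx. exists (x - c); split. lra. intros y Hy. unfold dist1 in Hy.
 assert (H := Rle_abs (x - y)). lra. Qed.
Lemma borel1_ge c : borel1 (fun x => c <= x).
Proof. apply (sa_ext (borel_sa dist1) (fun x => ~ x < c)). intros; lra. apply sa_compl. apply borel_sa. apply borel1_lt. Qed.
Lemma borel1_ico c d : borel1 (fun x => c <= x /\ x < d).
Proof. apply sa_inter. apply borel_sa. apply borel1_ge. apply borel1_lt. Qed.
Lemma borel1_T : borel1 (fun _ => True). Proof. apply sa_T, borel_sa. Qed.

Lemma borel2_fst B : borel1 B -> borel2 (fun p => B (fst p)).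
Proof. apply (borel_ind dist1 (fun B => borel2 (fun p => B (fst p)))).
 - split; [|split]. apply sa_T, borel_sa. intros A HA; apply sa_compl; auto; apply borel_sa.
   intros A HA; apply (sa_cup (borel_sa dist2) (fun k p => A k (fst p))); auto.
 - intros U HU. apply open_borel. intros p Hp. destruct (HU _ Hp) as [r [Hr H]]. exists r; split; auto.
   intros q Hq. apply H. unfold dist1. eapply Rle_lt_trans; [apply dist2_fst|]. auto. Qed.
Lemma borel2_snd B : borel1 B -> borel2 (fun p => B (snd p)).
Proof. apply (borel_ind dist1 (fun B => borel2 (fun p => B (snd p)))).
 - split; [|split]. apply sa_T, borel_sa. intros A HA; apply sa_compl; auto; apply borel_sa.
   intros A HA; apply (sa_cup (borel_sa dist2) (fun k p => A k (snd p))); auto.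
 - intros U HU. apply open_borel. intros p Hp. destruct (HU _ Hp) as [r [Hr H]]. exists r; split; auto.
   intros q Hq. apply H. unfold dist1. eapply Rle_lt_trans; [apply dist2_snd|]. auto. Qed.
Lemma borel2_rect A B : borel1 A -> borel1 B -> borel2 (fun p => A (fst p) /\ B (snd p)).
Proof. intros; apply sa_inter. apply borel_sa. apply borel2_fst; auto. apply borel2_snd; auto. Qed.


Lemma m_part {T} (M : set T -> Prop) (HM : is_sigma_algebra M) mu (Hmu : is_probability M mu)
  (A : nat -> set T) K (S : set T) :
  (forall j, (j < K)%nat -> M (A j)) -> (forall x, exists j, (j < K)%nat /\ A j x) ->
  (forall x i j, (i < K)%nat -> (j < K)%nat -> A i x -> A j x -> i = j) -> M S ->
  mu S = rsum (fun j => mu (fun x => S x /\ A j x)) K.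
Proof. intros HA Hc Hu HS. rewrite <- (m_finadd HM Hmu).
 apply mext. intros x; split. intros Sx; destruct (Hc x) as [j [Hj Ax]]; exists j; auto.
 intros [j [_ [? _]]]; auto.
 intros; apply sa_inter; auto.
 intros i j x Hi Hj Hij [_ Ai] [_ Aj]. apply Hij; eapply Hu; eauto. Qed.

(** one-dimensional grid: cells 0..N+1 *)
Definition ival (a h : R) (N : nat) (j : nat) (x : R) : Prop :=
  (j = 0%nat /\ x < a) \/
  ((1 <= j <= N)%nat /\ a + INR (j - 1) * h <= x /\ x < a + INR j * h) \/
  (j = S N /\ a + INR N * h <= x).

Lemma ival_borel a h N j : borel1 (ival a h N j).
Proof. unfold ival. assert (HS := borel_sa dist1).
 apply sa_union; auto. apply sa_inter; auto. apply sa_const; auto. apply borel1_lt.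
 apply sa_union; auto. apply sa_inter; auto. apply sa_const; auto.
 apply (sa_ext HS (fun x => a + INR (j - 1) * h <= x /\ x < a + INR j * h)). tauto. apply borel1_ico.
 apply sa_inter; auto. apply sa_const; auto. apply borel1_ge. Qed.

Lemma ival_range a h N j x : ival a h N j x -> (j < S (S N))%nat.
Proof. unfold ival; intros [[->]|[[? _]|[-> _]]]; lia. Qed.

Lemma ival_exists a h N x : 0 < h -> exists j, ival a h N j x.
Proof. intros Hh. destruct (Rlt_dec x a). exists 0%nat; left; auto.
 destruct (Rle_dec (a + INR N * h) x). exists (S N); right; right; auto.
 destruct (archimed ((x - a) / h)) as [H1 H2].
 set (k := up ((x - a) / h)) in *.
 assert (Hxa : 0 <= (x - a) / h). { unfold Rdiv; apply Rmult_le_pos; [lra|apply Rlt_le, Rinv_0_lt_compat; lra]. }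
 assert (Hk1 : (1 <= k)%Z). { apply le_IZR. assert (IZR k > 0) by lra. 
   assert (0 < k)%Z by (apply lt_IZR; simpl; lra). apply IZR_le. lia. }
 assert (HkN : (x - a) / h < INR N). { apply (Rmult_lt_reg_r h); auto. unfold Rdiv; rewrite Rmult_assoc, Rinv_l; lra. }
 assert (Hk2 : (k <= Z.of_nat N)%Z). { assert (IZR k - 1 < INR N) by lra. rewrite INR_IZR_INZ in H.
   assert (k - 1 < Z.of_nat N)%Z. apply lt_IZR. rewrite minus_IZR; simpl; lra. lia. }
 exists (Z.to_nat k). right; left. split. lia.
 assert (Ek : INR (Z.to_nat k) = IZR k). { rewrite INR_IZR_INZ, Z2Nat.id; auto; lia. }
 assert (Ek1 : INR (Z.to_nat k - 1) = IZR k - 1). { rewrite minus_INR by lia. rewrite Ek; simpl; lra. }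
 rewrite Ek, Ek1. split.
 - assert (IZR k - 1 <= (x - a) / h) by lra.
   apply (Rmult_le_compat_r h) in H; [|lra]. unfold Rdiv in H; rewrite Rmult_assoc, Rinv_l in H; lra.
 - apply (Rmult_lt_compat_r h) in H1; [|lra]. unfold Rdiv in H1; rewrite Rmult_assoc, Rinv_l in H1; lra. Qed.

Lemma ival_unique a h N x i j : 0 < h -> ival a h N i x -> ival a h N j x -> i = j.
Proof. intros Hh. assert (forall i j, (i < j)%nat -> ival a h N i x -> ival a h N j x -> False).
 { clear i j. intros i j Hij Hi Hj. unfold ival in *.
   assert (HN := pos_INR N).
   destruct Hi as [[-> Hi]|[[Hi1 [Hi2 Hi3]]|[-> Hi]]]; destruct Hj as [[-> Hj]|[[Hj1 [Hj2 Hj3]]|[-> Hj]]]; try lia.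
   - assert (0 <= INR (j - 1)) by apply pos_INR. nra.
   - nra.
   - assert (INR i <= INR (j - 1)) by (apply le_INR; lia). nra.
   - assert (INR i <= INR N) by (apply le_INR; lia). nra. }
 intros Hi Hj. destruct (Nat.lt_trichotomy i j) as [?|[?|?]]; auto; exfalso; eauto. Qed.

Lemma ival_part a h N : 0 < h ->
  (forall x, exists j, (j < S (S N))%nat /\ ival a h N j x) /\
  (forall x i j, ival a h N i x -> ival a h N j x -> i = j).
Proof. intros Hh; split. intros x; destruct (ival_exists a h N x Hh) as [j Hj]; exists j; split; auto.
 eapply ival_range; eauto. intros; eapply ival_unique; eauto. Qed.

Definition nearline (a h : R) (N : nat) (w : R) (u : R) : Prop :=
  exists j, (j <= N)%nat /\ Rabs (u - (a + INR j * h)) < w.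

Lemma ival_boundary a h N j u v w : 0 < h -> ival a h N j u -> ~ ival a h N j v -> Rabs (u - v) < w ->
  nearline a h N w v /\ nearline a h N w u.
Proof. intros Hh Hu Hv Hw.
 destruct (ival_exists a h N v Hh) as [j' Hj'].
 assert (Hne : j <> j') by (intros ->; auto).
 unfold ival in Hu, Hj'. unfold nearline.
 assert (Hab : forall t, (u < t <= v \/ v < t <= u) -> Rabs (v - t) < w /\ Rabs (u - t) < w).
 { intros t Ht. split; unfold Rabs; destruct Rcase_abs; unfold Rabs in Hw; destruct Rcase_abs in Hw; lra. }
 assert (HN := pos_INR N).
 destruct Hu as [[-> Hu]|[[Hu1 [Hu2 Hu3]]|[-> Hu]]]; destruct Hj' as [[-> Hj]|[[Hj1 [Hj2 Hj3]]|[-> Hj]]]; try lia.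
 - destruct (Hab (a + INR 0 * h)) as [A1 A2]. simpl. left. assert (0 <= INR (j'-1) * h) by (apply Rmult_le_pos; [apply pos_INR|lra]). lra.
   split; exists 0%nat; split; auto; lia.
 - destruct (Hab (a + INR 0 * h)) as [A1 A2]. simpl. left. assert (0 <= INR N * h) by nra. lra. split; exists 0%nat; split; auto; lia.
 - destruct (Hab (a + INR (j - 1) * h)) as [A1 A2]. right; assert (0 <= INR (j-1) * h) by (apply Rmult_le_pos; [apply pos_INR|lra]); lra.
   split; exists (j - 1)%nat; split; auto; lia.
 - destruct (Nat.lt_trichotomy j j') as [Hl|[Hl|Hl]]; [|lia|].
   + destruct (Hab (a + INR j * h)) as [A1 A2]. left. split; auto. assert (INR j <= INR (j' - 1)) by (apply le_INR; lia). nra.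
     split; exists j; split; auto; lia.
   + destruct (Hab (a + INR (j - 1) * h)) as [A1 A2]. right. split; auto. assert (INR j' <= INR (j - 1)) by (apply le_INR; lia). nra.
     split; exists (j - 1)%nat; split; auto; lia.
 - destruct (Hab (a + INR j * h)) as [A1 A2]. left. split; auto. assert (INR j <= INR N) by (apply le_INR; lia). nra.
   split; exists j; split; auto; lia.
 - destruct (Hab (a + INR N * h)) as [A1 A2]. right. split; auto. assert (0 <= INR N * h) by nra. lra.
   split; exists N; split; auto; lia.
 - destruct (Hab (a + INR N * h)) as [A1 A2]. right. split; auto. assert (INR j' <= INR N) by (apply le_INR; lia). nra.
   split; exists N; split; auto; lia. Qed.


Lemma glb_exists (S : R -> Prop) x0 : S x0 -> (forall x, S x -> 0 < x) -> exists m, is_glb S m.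
Proof. intros H0 Hpos.
 destruct (completeness (fun x => S (- x))) as [m [Hm1 Hm2]].
 - exists 0. intros x Hx. apply Hpos in Hx. lra.
 - exists (- x0). rewrite Ropp_involutive; auto.
 - exists (- m). split.
   + intros x Hx. assert (x <= - - x) by lra. assert (- x <= m). apply Hm1. rewrite Ropp_involutive; auto. lra.
   + intros m' Hm'. assert (m <= - m'). apply Hm2. intros x Hx. apply Hm' in Hx. lra. lra. Qed.

Lemma plt_iff {T} (d : T -> T -> R) P1 P2 eps :
  prokhorov_lt d P1 P2 eps <-> exists e, e < eps /\ prokhorov_ok d P1 P2 e.
Proof. split.
 - intros [m [[H1 H2] Hm]]. apply NNPP; intros Hn.
   assert (eps <= m). apply H2. intros x Hx. apply Rnot_lt_le; intros Hl. apply Hn; eauto. lra.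
 - intros [e [He Hok]]. destruct (glb_exists (prokhorov_ok d P1 P2) e Hok) as [m Hm].
   intros x [Hx _]; auto. exists m; split; auto. destruct Hm as [Hm _]. apply Hm in Hok. lra. Qed.

Lemma ind_01 {T} (A : set T) x : 0 <= ind A x <= 1.
Proof. unfold ind; destruct excluded_middle_informative; lra. Qed.
Lemma ind_mono {T} (A B : set T) x : (A x -> B x) -> ind A x <= ind B x.
Proof. unfold ind; destruct excluded_middle_informative; destruct excluded_middle_informative; try lra; tauto. Qed.
Lemma ind_mono2 {T} (A B : set T) x y : (A x -> B y) -> ind A x <= ind B y.
Proof. unfold ind; destruct excluded_middle_informative; destruct excluded_middle_informative; try lra; tauto. Qed.
Lemma ind_compl {T} (A : set T) x : ind (fun y => ~ A y) x = 1 - ind A x.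
Proof. unfold ind; destruct excluded_middle_informative; destruct excluded_middle_informative; try lra; tauto. Qed.
Lemma ind_true {T} (A : set T) x : A x -> ind A x = 1.
Proof. unfold ind; destruct excluded_middle_informative; tauto. Qed.
Lemma ind_false {T} (A : set T) x : ~ A x -> ind A x = 0.
Proof. unfold ind; destruct excluded_middle_informative; tauto. Qed.

Lemma emp_mono {T} n (pts : nat -> T) (A B : set T) :
  (forall i, (i < n)%nat -> A (pts i) -> B (pts i)) -> empirical n pts A <= empirical n pts B.
Proof. intros H. unfold empirical. apply Rmult_le_compat_l.
 destruct n. simpl; rewrite Rinv_0; lra. apply Rlt_le, Rinv_0_lt_compat, lt_0_INR; lia.
 apply rsum_le. intros; apply ind_mono; auto. Qed.

Lemma emp_compl {T} n (pts : nat -> T) A : (1 <= n)%nat ->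
  empirical n pts (fun x => ~ A x) = 1 - empirical n pts A.
Proof. intros Hn. unfold empirical. rewrite (rsum_ext _ (fun i => 1 - ind A (pts i))).
 rewrite rsum_minus, rsum_const. field. apply not_0_INR; lia. intros; apply ind_compl. Qed.

Lemma emp_range {T} n (pts : nat -> T) A : 0 <= empirical n pts A <= 1.
Proof. unfold empirical. destruct n. simpl; rewrite Rinv_0; lra.
 assert (0 < INR (S n)) by (apply lt_0_INR; lia).
 assert (0 <= rsum (fun i : nat => ind A (pts i)) (S n) <= INR (S n)).
 { split. apply rsum_nonneg; intros; apply ind_01. rewrite <- (Rmult_1_r (INR (S n))), <- rsum_const.
   apply rsum_le; intros; apply ind_01. }
 split. apply Rmult_le_pos; [apply Rlt_le, Rinv_0_lt_compat|]; lra.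
 apply (Rmult_le_reg_l (INR (S n))); auto. rewrite <- Rmult_assoc, Rinv_r by lra. lra. Qed.

Lemma emp_shift n (pts pts' : nat -> R * R) A eta :
  (forall i, (i < n)%nat -> dist2 (pts i) (pts' i) < eta) ->
  empirical n pts' A <= empirical n pts (enlarge dist2 A eta).
Proof. intros H. unfold empirical. apply Rmult_le_compat_l.
 destruct n. simpl; rewrite Rinv_0; lra. apply Rlt_le, Rinv_0_lt_compat, lt_0_INR; lia.
 apply rsum_le. intros i Hi; apply ind_mono2. intros HA. exists (pts' i); split; auto. Qed.

Lemma enlarge_mono {T} d (A : set T) e e' x : e <= e' -> enlarge d A e x -> enlarge d A e' x.
Proof. intros He [y [Hy Hd]]; exists y; split; auto; lra. Qed.

Lemma enlarge_enlarge A e f x : enlarge dist2 (enlarge dist2 A e) f x -> enlarge dist2 A (e + f) x.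
Proof. intros [y [[z [Hz Hyz]] Hxy]]. exists z; split; auto.
 assert (H := dist2_tri x z y). lra. Qed.

Section Shift.
Context (P : set (R * R) -> R) (HP : is_probability borel2 P).
Let HS := borel_sa dist2.

Lemma ok_shift n (pts pts' : nat -> R * R) e eta :
  0 < eta -> (forall i, (i < n)%nat -> dist2 (pts i) (pts' i) < eta) ->
  prokhorov_ok dist2 (empirical n pts) P e -> prokhorov_ok dist2 (empirical n pts') P (e + eta).
Proof. intros Heta Hd [He Hok]. split. lra. intros A HA. split.
 - eapply Rle_lt_trans. apply (emp_shift n pts pts' A eta Hd).
   destruct (Hok (enlarge dist2 A eta) (enlarge_borel2 _ _)) as [H1 _].
   assert (P (enlarge dist2 (enlarge dist2 A eta) e) <= P (enlarge dist2 A (e + eta))).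
   { apply (m_mono HS HP). apply enlarge_borel2. apply enlarge_borel2.
     intros x Hx. apply enlarge_enlarge in Hx. rewrite Rplus_comm; auto. }
   lra.
 - destruct (Hok A HA) as [_ H2].
   assert (empirical n pts (enlarge dist2 A e) <= empirical n pts' (enlarge dist2 A (e + eta))).
   { eapply Rle_trans. apply (emp_shift n pts' pts _ eta). intros i Hi; rewrite dist2_sym; auto.
     apply emp_mono. intros i _ Hx. apply enlarge_enlarge in Hx; auto. }
   lra. Qed.
End Shift.


Definition cell a b h N j l (p : R * R) : Prop := ival a h N j (fst p) /\ ival b h N l (snd p).
Definition strip a b h N w (p : R * R) : Prop := nearline a h N w (fst p) \/ nearline b h N w (snd p).

Lemma nearline_borel a h N w : borel1 (nearline a h N w).
Proof. apply open_borel. intros u [j [Hj Hu]]. exists (w - Rabs (u - (a + INR j * h))); split. lra.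
 intros v Hv. exists j; split; auto. unfold dist1 in Hv.
 assert (Rabs (v - (a + INR j * h)) <= Rabs (v - u) + Rabs (u - (a + INR j * h))).
 { replace (v - (a + INR j * h)) with ((v - u) + (u - (a + INR j * h))) by ring. apply Rabs_triang. }
 rewrite Rabs_minus_sym in Hv. lra. Qed.

Lemma cell_borel a b h N j l : borel2 (cell a b h N j l).
Proof. apply borel2_rect; apply ival_borel. Qed.

Lemma strip_borel a b h N w : borel2 (strip a b h N w).
Proof. apply sa_union. apply borel_sa. apply borel2_fst, nearline_borel. apply borel2_snd, nearline_borel. Qed.

Lemma enl_cell a b h N j l e w x : 0 < h -> e <= w ->
  enlarge dist2 (cell a b h N j l) e x -> cell a b h N j l x \/ strip a b h N w x.
Proof. intros Hh Hew [y [Hy Hd]]. destruct (classic (cell a b h N j l x)) as [|Hn]; auto. right.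
 destruct Hy as [Hy1 Hy2]. unfold cell in Hn.
 destruct (classic (ival a h N j (fst x))) as [H1|H1].
 - assert (H2 : ~ ival b h N l (snd x)) by tauto. right.
   apply (ival_boundary b h N l (snd y) (snd x) w); auto.
   assert (H := dist2_snd x y). rewrite Rabs_minus_sym in H. lra.
 - left. apply (ival_boundary a h N j (fst y) (fst x) w); auto.
   assert (H := dist2_fst x y). rewrite Rabs_minus_sym in H. lra. Qed.

Lemma enl_ncell a b h N j l e w x : 0 < h -> e <= w ->
  enlarge dist2 (fun p => ~ cell a b h N j l p) e x -> ~ cell a b h N j l x \/ strip a b h N w x.
Proof. intros Hh Hew [y [Hy Hd]]. destruct (classic (cell a b h N j l x)) as [Hc|]; auto. right.
 destruct Hc as [Hx1 Hx2]. unfold cell in Hy.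
 destruct (classic (ival a h N j (fst y))) as [H1|H1].
 - assert (H2 : ~ ival b h N l (snd y)) by tauto. right.
   apply (ival_boundary b h N l (snd x) (snd y) w); auto.
   assert (H := dist2_snd x y). lra.
 - left. apply (ival_boundary a h N j (fst x) (fst y) w); auto.
   assert (H := dist2_fst x y). lra. Qed.

Section CellClose.
Context (P : set (R * R) -> R) (HP : is_probability borel2 P).
Let HS := borel_sa dist2.

Lemma cell_close n pts a b h N j l e w : 0 < h -> (1 <= n)%nat -> e <= w ->
  prokhorov_ok dist2 (empirical n pts) P e ->
  Rabs (empirical n pts (cell a b h N j l) - P (cell a b h N j l)) <= P (strip a b h N w) + e.
Proof. intros Hh Hn Hew [He Hok].
 assert (Hc := cell_borel a b h N j l). assert (Hs := strip_borel a b h N w).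
 destruct (Hok _ Hc) as [H1 _].
 assert (Hnc : borel2 (fun p => ~ cell a b h N j l p)) by (apply sa_compl; auto).
 destruct (Hok _ Hnc) as [H2 _].
 assert (E1 : P (enlarge dist2 (cell a b h N j l) e) <= P (cell a b h N j l) + P (strip a b h N w)).
 { eapply Rle_trans. apply (m_mono HS HP). apply enlarge_borel2. apply (sa_union HS _ _ Hc Hs).
   intros x Hx. eapply enl_cell; eauto. apply (m_sub2 HS HP); auto. }
 assert (E2 : P (enlarge dist2 (fun p => ~ cell a b h N j l p) e) <= P (fun p => ~ cell a b h N j l p) + P (strip a b h N w)).
 { eapply Rle_trans. apply (m_mono HS HP). apply enlarge_borel2. apply (sa_union HS _ _ Hnc Hs).
   intros x Hx. eapply enl_ncell; eauto. apply (m_sub2 HS HP); auto. }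
 rewrite (m_compl HS HP) in E2 by auto. rewrite emp_compl in H2 by auto.
 apply Rabs_le. lra. Qed.
End CellClose.


Definition upd (s : nat -> nat) (k j : nat) : nat -> nat := fun i => if Nat.eq_dec i k then j else s i.

Fixpoint seqsum (K n : nat) (f : (nat -> nat) -> R) : R :=
  match n with
  | O => f (fun _ => O)
  | S n' => rsum (fun j => seqsum K n' (fun s => f (upd s n' j))) K
  end.

Lemma seqsum_S K n f : seqsum K (S n) f = rsum (fun j => seqsum K n (fun s => f (upd s n j))) K.
Proof. reflexivity. Qed.

Lemma seqsum_ext K n f g : (forall s, f s = g s) -> seqsum K n f = seqsum K n g.
Proof. revert f g; induction n; intros f g H; simpl; auto. apply rsum_ext; intros; apply IHn; auto. Qed.
Lemma seqsum_le K n f g : (forall s, f s <= g s) -> seqsum K n f <= seqsum K n g.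
Proof. revert f g; induction n; intros f g H; simpl; auto. apply rsum_le; intros; apply IHn; auto. Qed.
Lemma seqsum_scal K n f c : seqsum K n (fun s => f s * c) = seqsum K n f * c.
Proof. revert f; induction n; intros f; simpl; auto. rewrite (rsum_ext _ (fun j => seqsum K n (fun s => f (upd s n j)) * c)).
 rewrite Rmult_comm, <- rsum_scal. apply rsum_ext; intros; ring. intros; apply (IHn (fun s => f (upd s n k))). Qed.

Lemma rprod_ext f g n : (forall k, (k < n)%nat -> f k = g k) -> rprod f n = rprod g n.
Proof. induction n; intros H; simpl; auto. rewrite IHn, H; auto; intros; apply H; lia. Qed.
Lemma rprod_nonneg f n : (forall k, (k < n)%nat -> 0 <= f k) -> 0 <= rprod f n.
Proof. induction n; intros H; simpl. lra. apply Rmult_le_pos. apply IHn; intros; apply H; lia. apply H; lia. Qed.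
Lemma rprod_le f g n : (forall k, (k < n)%nat -> 0 <= f k <= g k) -> rprod f n <= rprod g n.
Proof. induction n; intros H; simpl. lra. assert (0 <= f n <= g n) by (apply H; lia).
 assert (0 <= rprod f n) by (apply rprod_nonneg; intros; apply H; lia).
 assert (rprod f n <= rprod g n) by (apply IHn; intros; apply H; lia). nra. Qed.
Lemma rprod_exp f n : rprod (fun i => exp (f i)) n = exp (rsum f n).
Proof. induction n; simpl. rewrite exp_0; auto. rewrite IHn, exp_plus; auto. Qed.

Lemma seqsum_prod K n (phi : nat -> nat -> R) :
  seqsum K n (fun s => rprod (fun i => phi i (s i)) n) = rprod (fun i => rsum (phi i) K) n.
Proof. induction n. simpl; auto.
 simpl seqsum. rewrite (rsum_ext _ (fun j => seqsum K n (fun s => rprod (fun i => phi i (s i)) n) * phi n j)).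
 rewrite IHn. simpl rprod. rewrite <- rsum_scal. apply rsum_ext; intros; ring.
 intros j Hj. rewrite <- seqsum_scal. apply seqsum_ext. intros s. simpl.
 unfold upd at 2. destruct (Nat.eq_dec n n); [|lia]. f_equal. apply rprod_ext. intros k Hk.
 unfold upd; destruct (Nat.eq_dec k n); auto; lia. Qed.

Definition idx (a h : R) (N : nat) (x : R) : nat := epsilon (inhabits O) (fun j => ival a h N j x).
Lemma idx_spec a h N x : 0 < h -> ival a h N (idx a h N x) x.
Proof. intros Hh. unfold idx. apply epsilon_spec. apply ival_exists; auto. Qed.
Lemma idx_eq a h N x j : 0 < h -> ival a h N j x -> idx a h N x = j.
Proof. intros Hh Hj. eapply ival_unique; eauto. apply idx_spec; auto. Qed.

Definition depends_on (n : nat) (G : (nat -> nat) -> Prop) :=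
  forall s s', (forall i, (i < n)%nat -> s i = s' i) -> G s -> G s'.

Section Cyl.
Context (Omega : Type) (F : set Omega -> Prop) (HF : is_sigma_algebra F)
  (Pr : set Omega -> R) (HPr : is_probability F Pr)
  (PZ : set R -> R) (Z : nat -> Omega -> R)
  (HZmeas : forall i B, borel1 B -> F (fun w => B (Z i w)))
  (HZiid : forall (n : nat) (B : nat -> set R), (forall i, borel1 (B i)) ->
      Pr (fun w => forall i, (i < n)%nat -> B i (Z i w)) = rprod (fun i => PZ (B i)) n)
  (a h : R) (N : nat) (Hh : 0 < h).

Definition jv (w : Omega) : nat -> nat := fun i => idx a h N (Z i w).

Lemma cyl_lemma n : forall (G : (nat -> nat) -> Prop) (B : nat -> set R) m,
  depends_on n G -> (forall i, borel1 (B i)) -> (n <= m)%nat ->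
  F (fun w => G (jv w) /\ forall i, (n <= i < m)%nat -> B i (Z i w)) /\
  Pr (fun w => G (jv w) /\ forall i, (n <= i < m)%nat -> B i (Z i w)) =
  seqsum (S (S N)) n (fun s => ind G s * rprod (fun i => PZ (if Nat.ltb i n then ival a h N (s i) else B i)) m).
Proof using HF HPr HZmeas HZiid Hh.
 induction n; intros G B m HG HB Hm.
 - simpl. destruct (classic (G (fun _ => O))) as [G0|G0].
   + assert (HGa : forall s, G s) by (intros s; apply (HG (fun _ => O)); auto; intros; lia).
     assert (Ee : (fun w => G (jv w) /\ forall i, (0 <= i < m)%nat -> B i (Z i w)) =
                  (fun w => forall i, (i < m)%nat -> B i (Z i w))).
     { apply set_ext; intros w; split. intros [_ H] i Hi; apply H; lia. intros H; split; auto. intros i Hi; apply H; lia. }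
     rewrite Ee, ind_true by auto. split. apply sa_fincap; auto. rewrite HZiid; auto. ring.
   + assert (Ee : (fun w => G (jv w) /\ forall i, (0 <= i < m)%nat -> B i (Z i w)) = (fun _ => False)).
     { apply set_ext; intros w; split; [|tauto]. intros [H _]. apply G0. apply (HG (jv w)); auto. intros; lia. }
     rewrite Ee, ind_false by auto. split. apply sa_empty; auto. rewrite (m_empty HF HPr). ring.
 - set (Gj := fun j s => G (upd s n j)).
   set (Bj := fun j i => if Nat.eq_dec i n then ival a h N j else B i).
   assert (HGj : forall j, depends_on n (Gj j)).
   { intros j s s' Hs. unfold Gj. apply HG. intros i Hi. unfold upd. destruct (Nat.eq_dec i n); auto. apply Hs; lia. }
   assert (HBj : forall j i, borel1 (Bj j i)). { intros j i; unfold Bj; destruct (Nat.eq_dec i n); auto. apply ival_borel. }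
   assert (IH := fun j => IHn (Gj j) (Bj j) m (HGj j) (HBj j) ltac:(lia)).
   assert (Ee : (fun w => G (jv w) /\ forall i, (S n <= i < m)%nat -> B i (Z i w)) =
     (fun w => exists j, (j < S (S N))%nat /\ (Gj j (jv w) /\ forall i, (n <= i < m)%nat -> Bj j i (Z i w)))).
   { apply set_ext; intros w; split.
     - intros [HGw HBw]. exists (jv w n). split. unfold jv. eapply ival_range. apply idx_spec; auto.
       split. unfold Gj. apply (HG (jv w)); auto. intros i Hi. unfold upd; destruct (Nat.eq_dec i n); subst; auto.
       intros i Hi. unfold Bj. destruct (Nat.eq_dec i n). subst. apply idx_spec; auto. apply HBw; lia.
     - intros [j [Hj [HGw HBw]]]. assert (Hjn : jv w n = j).
       { unfold jv. apply idx_eq; auto. assert (H := HBw n ltac:(lia)). unfold Bj in H. destruct (Nat.eq_dec n n); auto; lia. }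
       split. unfold Gj in HGw. apply (HG (upd (jv w) n j)); auto. intros i Hi. unfold upd; destruct (Nat.eq_dec i n); subst; auto.
       intros i Hi. assert (H := HBw i ltac:(lia)). unfold Bj in H. destruct (Nat.eq_dec i n); auto; lia. }
   rewrite Ee. split.
   + apply sa_fincup; auto. intros j _. apply (IH j).
   + rewrite (m_finadd HF HPr). rewrite seqsum_S. apply rsum_ext. intros j Hj. rewrite (proj2 (IH j)).
     apply seqsum_ext. intros s. f_equal. apply rprod_ext. intros i Hi.
     unfold Bj, upd. destruct (Nat.eq_dec i n).
     * subst. rewrite (proj2 (Nat.ltb_lt n (S n))) by lia. rewrite (proj2 (Nat.ltb_ge n n)) by lia. auto.
     * destruct (Nat.ltb i n) eqn:E1; destruct (Nat.ltb i (S n)) eqn:E2; auto.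
       apply Nat.ltb_lt in E1; apply Nat.ltb_ge in E2; lia.
       apply Nat.ltb_ge in E1; apply Nat.ltb_lt in E2; lia.
     * intros j _; apply (IH j).
     * intros i j w Hi Hj Hij [_ H1] [_ H2]. apply Hij.
       assert (A1 := H1 n ltac:(lia)). assert (A2 := H2 n ltac:(lia)). unfold Bj in A1, A2.
       destruct (Nat.eq_dec n n); [|lia]. eapply ival_unique; eauto. Qed.

Lemma cyl_event n (G : (nat -> nat) -> Prop) : depends_on n G ->
  F (fun w => G (jv w)) /\
  Pr (fun w => G (jv w)) = seqsum (S (S N)) n (fun s => ind G s * rprod (fun i => PZ (ival a h N (s i))) n).
Proof using HF HPr HZmeas HZiid Hh.
 intros HG. destruct (cyl_lemma n G (fun _ _ => True) n HG) as [H1 H2]; auto. intros; apply borel1_T.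
 assert (Ee : (fun w => G (jv w) /\ forall i, (n <= i < n)%nat -> True) = (fun w => G (jv w))).
 { apply set_ext; intros w; split; [tauto|]. intros; split; auto. }
 rewrite Ee in H1, H2. split; auto. rewrite H2. apply seqsum_ext; intros s. f_equal. apply rprod_ext.
 intros i Hi. rewrite (proj2 (Nat.ltb_lt i n)); auto. Qed.
End Cyl.


Lemma rsum_term f n k : (forall i, (i < n)%nat -> 0 <= f i) -> (k < n)%nat -> f k <= rsum f n.
Proof. induction n; intros H Hk. lia. simpl. destruct (Nat.eq_dec k n).
 subst. assert (0 <= rsum f n) by (apply rsum_nonneg; intros; apply H; lia). lra.
 assert (0 <= f n) by (apply H; lia). assert (f k <= rsum f n) by (apply IHn; auto; lia). lra. Qed.

Lemma nat_above (x : R) : exists N : nat, x < INR N.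
Proof. destruct (archimed (Rabs x)) as [H1 H2]. assert (H0 := Rabs_pos x).
 assert (0 < up (Rabs x))%Z by (apply lt_IZR; simpl; lra).
 exists (Z.to_nat (up (Rabs x))). rewrite INR_IZR_INZ, Z2Nat.id by lia. assert (H3 := Rle_abs x). lra. Qed.

Section OpenEv.
Context (Omega : Type) (F : set Omega -> Prop) (HF : is_sigma_algebra F)
  (Pr : set Omega -> R) (HPr : is_probability F Pr)
  (PZ : set R -> R) (Z : nat -> Omega -> R)
  (HZmeas : forall i B, borel1 B -> F (fun w => B (Z i w)))
  (HZiid : forall (n : nat) (B : nat -> set R), (forall i, borel1 (B i)) ->
      Pr (fun w => forall i, (i < n)%nat -> B i (Z i w)) = rprod (fun i => PZ (B i)) n).

Lemma open_event n (O : (nat -> R) -> Prop) :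
  (forall z, O z -> exists r, 0 < r /\ forall z', (forall i, (i < n)%nat -> Rabs (z' i - z i) < r) -> O z') ->
  F (fun w => O (fun i => Z i w)).
Proof using HF HPr HZmeas HZiid.
 intros HO.
 set (aN := fun N : nat => - (INR N + 1)).
 set (hN := fun N : nat => / (INR N + 1)).
 set (gN := fun N : nat => (2 * (N + 1) * (N + 1))%nat).
 assert (HhN : forall N, 0 < hN N). { intros; unfold hN; apply Rinv_0_lt_compat; assert (H := pos_INR N); lra. }
 assert (Hend : forall N, aN N + INR (gN N) * hN N = INR N + 1).
 { intros N; unfold aN, hN, gN. rewrite !mult_INR, plus_INR. simpl INR. field. assert (H := pos_INR N); lra. }
 set (GoodN := fun N (s : nat -> nat) => (forall i, (i < n)%nat -> (1 <= s i <= gN N)%nat) /\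
    forall z', (forall i, (i < n)%nat -> ival (aN N) (hN N) (gN N) (s i) (z' i)) -> O z').
 apply (sa_ext HF (fun w => exists N, GoodN N (jv Omega Z (aN N) (hN N) (gN N) w))).
 - intros w; split.
   + intros [N [_ HG]]. apply HG. intros i Hi. unfold jv. apply idx_spec; auto.
   + intros Hw. destruct (HO _ Hw) as [r [Hr Hz]].
     destruct (nat_above (rsum (fun i => Rabs (Z i w)) n + / r)) as [N HN].
     assert (Hri : 0 < / r) by (apply Rinv_0_lt_compat; auto).
     assert (HZb : forall i, (i < n)%nat -> Rabs (Z i w) < INR N + 1).
     { intros i Hi. assert (Rabs (Z i w) <= rsum (fun i => Rabs (Z i w)) n).
       apply (rsum_term (fun i => Rabs (Z i w))); auto. intros; apply Rabs_pos. lra. }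
     assert (Hhr : hN N < r).
     { unfold hN. assert (0 < INR N + 1) by (assert (H := pos_INR N); lra).
       assert (/ r < INR N + 1). { assert (0 <= rsum (fun i => Rabs (Z i w)) n) by (apply rsum_nonneg; intros; apply Rabs_pos). lra. }
       rewrite <- (Rinv_inv r). apply Rinv_lt_contravar; auto. apply Rmult_lt_0_compat; lra. }
     exists N. unfold jv.
     assert (Hmid : forall i, (i < n)%nat -> (1 <= idx (aN N) (hN N) (gN N) (Z i w) <= gN N)%nat).
     { intros i Hi. assert (Hs := idx_spec (aN N) (hN N) (gN N) (Z i w) (HhN N)).
       assert (Hb := HZb i Hi). unfold Rabs in Hb; destruct Rcase_abs in Hb;
       destruct Hs as [[_ Hs]|[[Hs _]|[_ Hs]]]; auto; rewrite ?Hend in Hs; unfold aN in Hs; lra. }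
     split; auto. intros z' Hz'. apply Hz. intros i Hi.
     assert (Hs := idx_spec (aN N) (hN N) (gN N) (Z i w) (HhN N)).
     assert (Hs' := Hz' i Hi). assert (Hm := Hmid i Hi).
     set (j := idx (aN N) (hN N) (gN N) (Z i w)) in *.
     destruct Hs as [[Hj _]|[[_ [Hs1 Hs2]]|[Hj _]]]; try lia.
     destruct Hs' as [[Hj _]|[[_ [Hs3 Hs4]]|[Hj _]]]; try lia.
     assert (INR j = INR (j - 1) + 1). { rewrite <- S_INR. f_equal. lia. }
     rewrite H in Hs2, Hs4. apply Rabs_def1; nra.
 - apply sa_cup; auto. intros N. refine (proj1 (cyl_event Omega F HF Pr HPr PZ Z HZmeas HZiid (aN N) (hN N) (gN N) (HhN N) n (GoodN N) _)).
   intros s s' Hss [H1 H2]. split. intros i Hi; rewrite <- Hss; auto.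
   intros z' Hz'. apply H2. intros i Hi; rewrite Hss; auto. Qed.
End OpenEv.


Lemma choice_fun {A B : Type} (Q : A -> B -> Prop) : (forall x, exists y, Q x y) -> exists f, forall x, Q x (f x).
Proof. intros H. exists (fun x => proj1_sig (constructive_indefinite_description _ (H x))).
 intros x. apply (proj2_sig (constructive_indefinite_description _ (H x))). Qed.

Definition Un (a b h : R) (N : nat) (U : nat -> nat -> Prop) (p : R * R) : Prop :=
  U (idx a h N (fst p)) (idx b h N (snd p)).
Definition sd {T} (A B : set T) (x : T) : Prop := (A x /\ ~ B x) \/ (B x /\ ~ A x).

Lemma Un_borel a b h N U : 0 < h -> borel2 (Un a b h N U).
Proof. intros Hh. assert (HS := borel_sa dist2).
 apply (sa_ext HS (fun p => exists j, exists l, U j l /\ ival a h N j (fst p) /\ ival b h N l (snd p))).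
 - intros p; unfold Un; split. intros [j [l [Hu [H1 H2]]]]. rewrite (idx_eq _ _ _ _ _ Hh H1), (idx_eq _ _ _ _ _ Hh H2); auto.
   intros Hu. exists (idx a h N (fst p)), (idx b h N (snd p)). split; auto. split; apply idx_spec; auto.
 - apply sa_cup; auto; intros j. apply sa_cup; auto; intros l. apply sa_inter; auto. apply sa_const; auto.
   apply borel2_rect; apply ival_borel. Qed.

Lemma sd_borel A B : borel2 A -> borel2 B -> borel2 (sd A B).
Proof. intros; assert (HS := borel_sa dist2). apply sa_union; auto; apply sa_diff; auto. Qed.

Fixpoint hmin (f : nat -> R) (K : nat) : R := match K with O => 1 | S k => Rmin (hmin f k) (f k) end.
Fixpoint lmax (f : nat -> R) (K : nat) : R := match K with O => 0 | S k => Rmax (lmax f k) (f k) end.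
Lemma hmin_pos f K : (forall k, 0 < f k) -> 0 < hmin f K.
Proof. intros H; induction K; simpl. lra. apply Rmin_glb_lt; auto. Qed.
Lemma hmin_le f K k : (k < K)%nat -> hmin f K <= f k.
Proof. induction K; intros Hk. lia. simpl. destruct (Nat.eq_dec k K). subst; apply Rmin_r.
 eapply Rle_trans. apply Rmin_l. apply IHK; lia. Qed.
Lemma lmax_ge f K k : (k < K)%nat -> f k <= lmax f K.
Proof. induction K; intros Hk. lia. simpl. destruct (Nat.eq_dec k K). subst; apply Rmax_r.
 eapply Rle_trans. apply IHK; lia. apply Rmax_l. Qed.

Section Approx.
Context (P Q : set (R * R) -> R) (HP : is_probability borel2 P) (HR : is_probability borel2 Q).
Let HS := borel_sa dist2.

Definition gridok (h0 L0 a b h : R) (N : nat) : Prop :=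
  0 < h /\ h <= h0 /\ a <= - L0 /\ b <= - L0 /\ L0 <= a + INR N * h /\ L0 <= b + INR N * h.

Definition Approx (C : set (R * R)) : Prop :=
  borel2 C /\ forall eta, 0 < eta -> exists h0 L0, 0 < h0 /\ forall a b h N, gridok h0 L0 a b h N ->
    exists U, P (sd C (Un a b h N U)) + Q (sd C (Un a b h N U)) < eta.

Lemma approx_T : Approx (fun _ => True).
Proof using HP HR. split. apply sa_T; auto. intros eta He. exists 1, 0. split. lra.
 intros a b h N Hg. exists (fun _ _ => True).
 rewrite (mext P _ (fun _ => False)), (mext Q _ (fun _ => False)), (m_empty HS HP), (m_empty HS HR). lra.
 all: unfold sd, Un; intros; tauto. Qed.

Lemma approx_compl C : Approx C -> Approx (fun x => ~ C x).
Proof using HP HR. intros [HC H]. split. apply sa_compl; auto. intros eta He.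
 destruct (H eta He) as [h0 [L0 [Hh0 H2]]]. exists h0, L0; split; auto. intros a b h N Hg.
 destruct (H2 a b h N Hg) as [U HU]. exists (fun j l => ~ U j l).
 rewrite (mext P _ (sd C (Un a b h N U))), (mext Q _ (sd C (Un a b h N U))); auto.
 all: unfold sd, Un; intros; tauto. Qed.

Lemma approx_cup (C : nat -> set (R * R)) : (forall k, Approx (C k)) -> Approx (fun x => exists k, C k x).
Proof using HP HR. intros HA. assert (HC : forall k, borel2 (C k)) by (intros; apply HA).
 split. apply sa_cup; auto. intros eta He.
 set (SK := fun K x => exists k, (k < K)%nat /\ C k x).
 assert (HSK : forall K, borel2 (SK K)) by (intros; apply sa_fincup; auto).
 assert (Hinc : forall K x, SK K x -> SK (S K) x) by (intros K x [k [Hk Hx]]; exists k; split; auto).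
 assert (Hun : (fun x => exists K, SK K x) = (fun x => exists k, C k x)).
 { apply set_ext; intros x; split. intros [K [k [_ Hk]]]; eauto. intros [k Hk]; exists (S k), k; split; auto. }
 assert (CP := m_cont_below HS HP SK HSK Hinc). assert (CR := m_cont_below HS HR SK HSK Hinc).
 rewrite Hun in CP, CR.
 destruct (CP (eta / 3)) as [K1 HK1]. lra. destruct (CR (eta / 3)) as [K2 HK2]. lra.
 set (K := max K1 K2).
 assert (HK1' := HK1 K ltac:(lia)). assert (HK2' := HK2 K ltac:(lia)). unfold R_dist in HK1', HK2'.
 set (eta' := eta / (3 * (INR K + 1))).
 assert (He' : 0 < eta') by (unfold eta'; apply Rdiv_lt_0_compat; [lra|assert (H := pos_INR K); lra]).
 assert (Hch : forall k, exists hl : R * R, 0 < fst hl /\ forall a b h N, gridok (fst hl) (snd hl) a b h N ->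
    exists U, P (sd (C k) (Un a b h N U)) + Q (sd (C k) (Un a b h N U)) < eta').
 { intros k. destruct (proj2 (HA k) eta' He') as [h0 [L0 [H1 H2]]]. exists (h0, L0); simpl; auto. }
 destruct (choice_fun _ Hch) as [hl Hhl].
 exists (hmin (fun k => fst (hl k)) K), (lmax (fun k => snd (hl k)) K). split.
 apply hmin_pos; intros; apply Hhl.
 intros a b h N [Hh [Hh0 [Ha [Hb [Ha2 Hb2]]]]].
 assert (HU : forall k, exists U, (k < K)%nat -> P (sd (C k) (Un a b h N U)) + Q (sd (C k) (Un a b h N U)) < eta').
 { intros k. destruct (Compare_dec.lt_dec k K) as [Hk|Hk].
   - destruct (proj2 (Hhl k) a b h N) as [U HU]. 
     assert (hmin (fun k => fst (hl k)) K <= fst (hl k)) by (apply (hmin_le (fun k => fst (hl k))); auto).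
     assert (snd (hl k) <= lmax (fun k => snd (hl k)) K) by (apply (lmax_ge (fun k => snd (hl k))); auto).
     repeat split; auto; lra. exists U; auto.
   - exists (fun _ _ => True). intros; lia. }
 destruct (choice_fun _ HU) as [Uf HUf].
 exists (fun j l => exists k, (k < K)%nat /\ Uf k j l).
 set (T0 := fun x => (exists k, C k x) /\ ~ SK K x).
 set (Tk := fun k => sd (C k) (Un a b h N (Uf k))).
 assert (Hsub : forall x, sd (fun x => exists k, C k x) (Un a b h N (fun j l => exists k, (k < K)%nat /\ Uf k j l)) x ->
    T0 x \/ exists k, (k < K)%nat /\ Tk k x).
 { intros x [[[k Hk] Hn]|[[k [Hk HU2]] Hn]].
   - destruct (classic (SK K x)) as [[k' [Hk' Hx']]|Hs]. right. exists k'; split; auto. left; split; auto.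
     intros HU2; apply Hn. exists k'; auto. left. split; eauto.
   - right. exists k; split; auto. right. split; auto. intros Hc; apply Hn; eauto. }
 assert (HT0 : borel2 T0) by (apply sa_diff; auto; apply sa_cup; auto).
 assert (HTk : forall k, borel2 (Tk k)) by (intros; apply sd_borel; auto; apply Un_borel; auto).
 assert (Hbd : forall mu, is_probability borel2 mu ->
    mu (sd (fun x => exists k, C k x) (Un a b h N (fun j l => exists k, (k < K)%nat /\ Uf k j l))) <=
    mu T0 + rsum (fun k => mu (Tk k)) K).
 { intros mu Hmu. eapply Rle_trans. apply (m_mono HS Hmu). apply sd_borel. apply sa_cup; auto. apply Un_borel; auto.
   apply (sa_union HS T0 (fun x => exists k, (k < K)%nat /\ Tk k x) HT0). apply sa_fincup; auto. intros; apply HTk. apply Hsub.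
   eapply Rle_trans. apply (m_sub2 HS Hmu); auto. apply sa_fincup; auto. intros; apply HTk.
   assert (mu (fun x => exists k, (k < K)%nat /\ Tk k x) <= rsum (fun k => mu (Tk k)) K) by (apply (m_finsub HS Hmu); intros; apply HTk). lra. }
 assert (HsumPR : rsum (fun k => P (Tk k)) K + rsum (fun k => Q (Tk k)) K <= INR K * eta').
 { rewrite <- rsum_plus, <- rsum_const.
   apply rsum_le. intros k Hk. apply Rlt_le. apply HUf; auto. }
 assert (HT0P : P T0 = P (fun x => exists k, C k x) - P (SK K)).
 { unfold T0. apply (m_diff HS HP); [apply (sa_cup HS); intros; apply HC | apply HSK | intros x [k [_ Hk]]; eauto]. }
 assert (HT0R : Q T0 = Q (fun x => exists k, C k x) - Q (SK K)).
 { unfold T0. apply (m_diff HS HR); [apply (sa_cup HS); intros; apply HC | apply HSK | intros x [k [_ Hk]]; eauto]. }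
 assert (INR K * eta' < eta / 3).
 { assert (H := pos_INR K).
   replace (INR K * eta') with (eta/3 * (INR K / (INR K + 1))) by (unfold eta'; field; lra).
   assert (INR K / (INR K + 1) < 1).
   { apply (Rmult_lt_reg_r (INR K + 1)); [lra|]; unfold Rdiv; rewrite Rmult_assoc, Rinv_l; lra. }
   assert (0 < eta / 3) by lra. nra. }
 assert (H1 := Hbd P HP). assert (H2 := Hbd Q HR).
 apply Rabs_def2 in HK1'. apply Rabs_def2 in HK2'. lra. Qed.
End Approx.


Lemma ival_close a h N j u v : 0 < h -> a <= u -> u < a + INR N * h -> ival a h N j u -> ival a h N j v ->
  Rabs (u - v) < h.
Proof. intros Hh H1 H2 Hu Hv. unfold ival in *.
 destruct Hu as [[-> Hu]|[[Hj [Hu1 Hu2]]|[-> Hu]]]; try lra.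
 destruct Hv as [[Hv _]|[[_ [Hv1 Hv2]]|[Hv _]]]; try lia.
 assert (INR j = INR (j - 1) + 1). { rewrite <- S_INR. f_equal. lia. }
 rewrite H in Hu2, Hv2. apply Rabs_def1; nra. Qed.

Section Approx2.
Context (P Q : set (R * R) -> R) (HP : is_probability borel2 P) (HR : is_probability borel2 Q).
Let HS := borel_sa dist2.

Lemma approx_open U : metric_open dist2 U -> Approx P Q U.
Proof using HP HR. intros HU. split. apply open_borel; auto. intros eta He.
 set (rho := fun m : nat => / (INR m + 1)).
 assert (Hrho : forall m, 0 < rho m) by (intros; unfold rho; apply Rinv_0_lt_compat; assert (H := pos_INR m); lra).
 set (V := fun m p => (forall q, dist2 p q < rho m -> U q) /\ (- INR m <= fst p /\ fst p < INR m) /\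
                      (- INR m <= snd p /\ snd p < INR m)).
 assert (HV : forall m, borel2 (V m)).
 { intros m. unfold V. apply sa_inter; auto. apply (sa_ext HS (fun p => ~ enlarge dist2 (fun q => ~ U q) (rho m) p)).
   intros p; split. intros Hn q Hq. apply NNPP; intros Hu; apply Hn; exists q; auto.
   intros H [q [Hq1 Hq2]]. auto. apply sa_compl; auto. apply enlarge_borel2.
   exact (borel2_rect (fun x => - INR m <= x /\ x < INR m) (fun x => - INR m <= x /\ x < INR m) (borel1_ico _ _) (borel1_ico _ _)). }
 assert (Hinc : forall m p, V m p -> V (S m) p).
 { intros m p [H1 [H2 H3]]. assert (rho (S m) <= rho m).
   { unfold rho. rewrite S_INR. apply Rinv_le_contravar. assert (H := pos_INR m); lra. lra. }
   unfold V. rewrite S_INR. split. intros q Hq; apply H1; lra. lra. }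
 assert (Hun : (fun p => exists m, V m p) = U).
 { apply set_ext; intros p; split. intros [m [H1 _]]. apply H1. unfold dist2. 
   replace ((fst p - fst p) ^ 2 + (snd p - snd p) ^ 2) with 0 by ring. rewrite sqrt_0; auto.
   intros Hp. destruct (HU p Hp) as [r [Hr Hr2]].
   destruct (nat_above (Rabs (fst p) + Rabs (snd p) + / r)) as [m Hm].
   assert (0 < / r) by (apply Rinv_0_lt_compat; auto).
   assert (A1 := Rabs_pos (fst p)). assert (A2 := Rabs_pos (snd p)).
   exists m. split. intros q Hq. apply Hr2. assert (rho m < r).
   { unfold rho. rewrite <- (Rinv_inv r). apply Rinv_lt_contravar. apply Rmult_lt_0_compat; lra. lra. } lra.
   split; split; unfold Rabs in *; repeat destruct Rcase_abs; lra. }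
 assert (CP := m_cont_below HS HP V HV Hinc). assert (CR := m_cont_below HS HR V HV Hinc).
 rewrite Hun in CP, CR.
 destruct (CP (eta / 2)) as [M1 HM1]. lra. destruct (CR (eta / 2)) as [M2 HM2]. lra.
 set (m := max M1 M2). assert (HM1' := HM1 m ltac:(lia)). assert (HM2' := HM2 m ltac:(lia)).
 unfold R_dist in *. apply Rabs_def2 in HM1'. apply Rabs_def2 in HM2'.
 exists (rho m / 2), (INR m). split. assert (H := Hrho m); lra.
 intros a b h N [Hh [Hh0 [Ha [Hb [Ha2 Hb2]]]]].
 exists (fun j l => forall q, ival a h N j (fst q) -> ival b h N l (snd q) -> U q).
 assert (Hsub : forall p, sd U (Un a b h N (fun j l => forall q, ival a h N j (fst q) -> ival b h N l (snd q) -> U q)) p ->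
   U p /\ ~ V m p).
 { intros p [[Hp Hn]|[Hc Hn]].
   - split; auto. intros [Hv1 [Hv2 Hv3]]. apply Hn. unfold Un. intros q Hq1 Hq2. apply Hv1.
     assert (E1 := ival_close a h N _ (fst p) (fst q) Hh ltac:(lra) ltac:(lra) (idx_spec _ _ _ _ Hh) Hq1).
     assert (E2 := ival_close b h N _ (snd p) (snd q) Hh ltac:(lra) ltac:(lra) (idx_spec _ _ _ _ Hh) Hq2).
     assert (E3 := dist2_le_sum p q). lra.
   - exfalso. apply Hn. apply Hc; apply idx_spec; auto. }
 assert (Hbd : forall mu, is_probability borel2 mu -> mu (sd U (Un a b h N (fun j l => forall q, ival a h N j (fst q) -> ival b h N l (snd q) -> U q))) <= mu U - mu (V m)).
 { intros mu Hmu. assert (HUb : borel2 U) by (apply open_borel; auto).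
   rewrite <- (m_diff HS Hmu U (V m) HUb (HV m)).
   apply (m_mono HS Hmu). apply sd_borel; auto. apply Un_borel; auto.
   apply (sa_diff HS _ _ HUb (HV m)). exact Hsub.
   intros p Hp. rewrite <- Hun. eauto. }
 assert (H1 := Hbd P HP). assert (H2 := Hbd Q HR). lra. Qed.

Lemma approx_all C : borel2 C -> Approx P Q C.
Proof using HP HR. apply (borel_ind dist2 (Approx P Q)).
 split; [|split]. apply approx_T; auto. apply approx_compl; auto. apply approx_cup; auto.
 apply approx_open. Qed.
End Approx2.


Definition Cn (parts : list (set (R * R))) (k : nat) : set (R * R) := nth k parts (fun _ => False).
Definition Bad (parts : list (set (R * R))) a b h N (kap : nat -> nat -> nat) (p : R * R) : Prop :=
  ~ Cn parts (kap (idx a h N (fst p)) (idx b h N (snd p))) p.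

Lemma Cn_borel parts k : is_partition borel2 parts -> borel2 (Cn parts k).
Proof. intros [H _]. unfold Cn. destruct (Compare_dec.lt_dec k (length parts)).
 apply H, nth_In; auto. rewrite nth_overflow by lia. apply sa_empty, borel_sa. Qed.

Lemma Bad_borel parts a b h N kap : 0 < h -> is_partition borel2 parts -> borel2 (Bad parts a b h N kap).
Proof. intros Hh Hp. assert (HS := borel_sa dist2).
 apply (sa_ext HS (fun p => exists j, exists l, (ival a h N j (fst p) /\ ival b h N l (snd p)) /\ ~ Cn parts (kap j l) p)).
 - intros p; unfold Bad; split. intros [j [l [[H1 H2] H3]]]. rewrite (idx_eq _ _ _ _ _ Hh H1), (idx_eq _ _ _ _ _ Hh H2); auto.
   intros H. exists (idx a h N (fst p)), (idx b h N (snd p)). split; auto. split; apply idx_spec; auto.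
 - apply sa_cup; auto; intros j. apply sa_cup; auto; intros l. apply sa_diff; auto.
   apply borel2_rect; apply ival_borel. apply Cn_borel; auto. Qed.

Section Label.
Context (P Q : set (R * R) -> R) (HP : is_probability borel2 P) (HR : is_probability borel2 Q).
Let HS := borel_sa dist2.

Lemma approx_fin (C : nat -> set (R * R)) K : (forall k, Approx P Q (C k)) -> forall eta, 0 < eta ->
  exists h0 L0, 0 < h0 /\ forall a b h N, gridok h0 L0 a b h N -> exists Uf : nat -> nat -> nat -> Prop,
   forall k, (k < K)%nat -> P (sd (C k) (Un a b h N (Uf k))) + Q (sd (C k) (Un a b h N (Uf k))) < eta.
Proof using. intros HA eta He.
 assert (Hch : forall k, exists hl : R * R, 0 < fst hl /\ forall a b h N, gridok (fst hl) (snd hl) a b h N ->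
    exists U, P (sd (C k) (Un a b h N U)) + Q (sd (C k) (Un a b h N U)) < eta).
 { intros k. destruct (proj2 (HA k) eta He) as [h0 [L0 [H1 H2]]]. exists (h0, L0); simpl; auto. }
 destruct (choice_fun _ Hch) as [hl Hhl].
 exists (hmin (fun k => fst (hl k)) K), (lmax (fun k => snd (hl k)) K). split.
 apply hmin_pos; intros; apply Hhl.
 intros a b h N [Hh [Hh0 [Ha [Hb [Ha2 Hb2]]]]].
 assert (HU : forall k, exists U, (k < K)%nat -> P (sd (C k) (Un a b h N U)) + Q (sd (C k) (Un a b h N U)) < eta).
 { intros k. destruct (Compare_dec.lt_dec k K) as [Hk|Hk].
   - destruct (proj2 (Hhl k) a b h N) as [U HU]. 
     assert (hmin (fun k => fst (hl k)) K <= fst (hl k)) by (apply (hmin_le (fun k => fst (hl k))); auto).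
     assert (snd (hl k) <= lmax (fun k => snd (hl k)) K) by (apply (lmax_ge (fun k => snd (hl k))); auto).
     repeat split; auto; lra. exists U; auto.
   - exists (fun _ _ => True). intros; lia. }
 destruct (choice_fun _ HU) as [Uf HUf]. exists Uf; auto. Qed.

Lemma part_label parts : is_partition borel2 parts -> forall eta, 0 < eta ->
  exists h0 L0, 0 < h0 /\ forall a b h N, gridok h0 L0 a b h N -> exists kap : nat -> nat -> nat,
   (forall j l, (kap j l < length parts)%nat) /\
   P (Bad parts a b h N kap) + Q (Bad parts a b h N kap) < eta.
Proof using HP HR. intros Hp eta He. set (K := length parts).
 assert (HK : (1 <= K)%nat). { destruct Hp as [_ [Hc _]]. destruct (Hc (0, 0)) as [i [Hi _]]. unfold K; lia. }
 set (eta' := eta / (INR K + 1)).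
 assert (He' : 0 < eta') by (unfold eta'; apply Rdiv_lt_0_compat; [lra|assert (H := pos_INR K); lra]).
 destruct (approx_fin (Cn parts) K (fun k => approx_all P Q HP HR _ (Cn_borel parts k Hp)) eta' He') as [h0 [L0 [Hh0 HA]]].
 exists h0, L0. split; auto. intros a b h N Hg. destruct (HA a b h N Hg) as [Uf HUf].
 assert (Hh : 0 < h) by apply Hg.
 set (kap := fun j l => let k := epsilon (inhabits O) (fun k => (k < K)%nat /\ Uf k j l) in if Nat.ltb k K then k else O).
 assert (Hkap : forall j l, (kap j l < K)%nat).
 { intros j l. unfold kap. destruct (Nat.ltb _ K) eqn:E. apply Nat.ltb_lt; auto. lia. }
 assert (Hkap2 : forall j l k, (k < K)%nat -> Uf k j l -> Uf (kap j l) j l).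
 { intros j l k Hk Hu. assert (HE := epsilon_spec (inhabits O) (fun k => (k < K)%nat /\ Uf k j l) (ex_intro _ k (conj Hk Hu))).
   simpl in HE. destruct HE as [HE1 HE2]. unfold kap. rewrite (proj2 (Nat.ltb_lt _ K) HE1). auto. }
 exists kap. split; auto.
 set (Tk := fun k => sd (Cn parts k) (Un a b h N (Uf k))).
 assert (HTk : forall k, borel2 (Tk k)) by (intros; apply sd_borel; [apply Cn_borel; auto|apply Un_borel; auto]).
 assert (Hsub : forall p, Bad parts a b h N kap p -> exists k, (k < K)%nat /\ Tk k p).
 { intros p Hb. destruct Hp as [_ [Hc _]]. destruct (Hc p) as [k0 [Hk0 Hp0]].
   set (j := idx a h N (fst p)) in *. set (l := idx b h N (snd p)) in *.
   destruct (classic (Uf k0 j l)) as [Hu|Hu].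
   - exists (kap j l). split; auto. unfold Tk. right. split; auto. unfold Un. apply (Hkap2 j l k0); auto.
   - exists k0. split; auto. unfold Tk. left. split; auto. }
 assert (Hbd : forall mu, is_probability borel2 mu -> mu (Bad parts a b h N kap) <= rsum (fun k => mu (Tk k)) K).
 { intros mu Hmu. eapply Rle_trans. apply (m_mono HS Hmu). apply Bad_borel; auto. apply sa_fincup; auto. intros; apply HTk.
   apply Hsub. apply (m_finsub HS Hmu). intros; apply HTk. }
 assert (rsum (fun k => P (Tk k)) K + rsum (fun k => Q (Tk k)) K <= INR K * eta').
 { rewrite <- rsum_plus, <- rsum_const. apply rsum_le. intros k Hk. apply Rlt_le. apply HUf; auto. }
 assert (INR K * eta' < eta).
 { assert (HKp := pos_INR K).
   replace (INR K * eta') with (eta * (INR K / (INR K + 1))) by (unfold eta'; field; lra).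
   assert (INR K / (INR K + 1) < 1).
   { apply (Rmult_lt_reg_r (INR K + 1)); [lra|]; unfold Rdiv; rewrite Rmult_assoc, Rinv_l; lra. }
   nra. }
 assert (H1 := Hbd P HP). assert (H2 := Hbd Q HR). lra. Qed.
End Label.


Lemma marg_fst (P : set (R * R) -> R) : is_probability borel2 P -> is_probability borel1 (fun B => P (fun p => B (fst p))).
Proof. intros [H1 [H2 H3]]. split; [|split].
 - intros A HA. apply H1, borel2_fst; auto.
 - auto.
 - intros A HA Hd. apply (H3 (fun k p => A k (fst p))). intros; apply borel2_fst; auto.
   intros i j x; apply Hd. Qed.
Lemma marg_snd (P : set (R * R) -> R) : is_probability borel2 P -> is_probability borel1 (fun B => P (fun p => B (snd p))).
Proof. intros [H1 [H2 H3]]. split; [|split].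
 - intros A HA. apply H1, borel2_snd; auto.
 - auto.
 - intros A HA Hd. apply (H3 (fun k p => A k (snd p))). intros; apply borel2_snd; auto.
   intros i j x; apply Hd. Qed.

Lemma rsum_lt f g n : (1 <= n)%nat -> (forall k, (k < n)%nat -> f k < g k) -> rsum f n < rsum g n.
Proof. induction n; intros Hn H. lia. simpl. destruct n. simpl. assert (f 0%nat < g 0%nat) by (apply H; lia). lra.
 assert (rsum f (S n) < rsum g (S n)) by (apply IHn; [lia|intros; apply H; lia]).
 assert (f (S n) < g (S n)) by (apply H; lia). lra. Qed.

Lemma Zabs_lt1 (z : Z) : Rabs (IZR z) < 1 -> z = 0%Z.
Proof. intros H. apply Rabs_def2 in H. destruct H as [H1 H2].
 assert (z < 1)%Z by (apply lt_IZR; auto). assert (-1 < z)%Z by (apply lt_IZR; simpl; lra). lia. Qed.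

Section Strip.
Context (mu : set R -> R) (Hmu : is_probability borel1 mu).
Let HS := borel_sa dist1.

Lemma strip_select a0 h N (M : nat) : 0 < h -> (1 <= M)%nat ->
  exists m, (m < M)%nat /\ mu (nearline (a0 + INR m * h / INR M) h N (h / (3 * INR M))) <= / INR M.
Proof using Hmu. intros Hh HM.
 assert (HMp : 0 < INR M) by (apply lt_0_INR; lia).
 set (w := h / (3 * INR M)).
 set (Sm := fun m => nearline (a0 + INR m * h / INR M) h N w).
 assert (Hdis : forall i j x, (i < M)%nat -> (j < M)%nat -> (i < j)%nat -> Sm i x -> Sm j x -> False).
 { intros i j x Hi Hj Hij [ji [Hji Hx1]] [jj [Hjj Hx2]].
   set (z := ((Z.of_nat i - Z.of_nat j) + (Z.of_nat ji - Z.of_nat jj) * Z.of_nat M)%Z).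
   assert (Hz : IZR z = (INR i - INR j) + (INR ji - INR jj) * INR M).
   { unfold z. rewrite plus_IZR, mult_IZR, !minus_IZR, <- !INR_IZR_INZ. ring. }
   assert (Habs : Rabs (IZR z) < 1).
   { rewrite Hz. 
     assert (E : (INR i - INR j) + (INR ji - INR jj) * INR M =
       ((x - (a0 + INR j * h / INR M + INR jj * h)) - (x - (a0 + INR i * h / INR M + INR ji * h))) * (INR M / h)).
     { field. lra. }
     rewrite E, Rabs_mult. rewrite (Rabs_right (INR M / h)) by (apply Rle_ge, Rlt_le, Rdiv_lt_0_compat; auto).
     assert (Rabs ((x - (a0 + INR j * h / INR M + INR jj * h)) - (x - (a0 + INR i * h / INR M + INR ji * h))) < 2 * w).
     { eapply Rle_lt_trans. apply Rabs_triang. rewrite Rabs_Ropp. lra. }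
     assert (2 * w * (INR M / h) < 1). { unfold w. field_simplify; lra. }
     assert (0 < INR M / h) by (apply Rdiv_lt_0_compat; auto). nra. }
   apply Zabs_lt1 in Habs. unfold z in Habs. clear z Hz.
   destruct (Nat.lt_trichotomy ji jj) as [Hl|[Hl|Hl]].
   - assert ((Z.of_nat jj - Z.of_nat ji) * Z.of_nat M >= Z.of_nat M)%Z by nia. lia.
   - subst. lia.
   - assert ((Z.of_nat ji - Z.of_nat jj) * Z.of_nat M >= Z.of_nat M)%Z by nia. lia. }
 assert (HSb : forall m, borel1 (Sm m)) by (intros; apply nearline_borel).
 apply NNPP; intros Hn.
 assert (Hall : forall m, (m < M)%nat -> / INR M < mu (Sm m)).
 { intros m Hm. apply Rnot_le_lt. intros Hle. apply Hn. exists m; split; auto. }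
 assert (Hsum : rsum (fun m => mu (Sm m)) M <= 1).
 { rewrite <- (m_finadd HS Hmu Sm M). apply (m_le1 HS Hmu). apply sa_fincup; auto.
   intros; apply HSb. intros; apply HSb. intros i j x Hi Hj Hij H1 H2.
   destruct (Nat.lt_ge_cases i j). apply (Hdis i j x); auto.
   apply (Hdis j i x); auto. lia. }
 assert (rsum (fun _ => / INR M) M < rsum (fun m => mu (Sm m)) M) by (apply rsum_lt; auto).
 rewrite rsum_const in H. rewrite Rinv_r in H by lra. lra. Qed.
End Strip.


Lemma rsum_shift f n : rsum f (S n) = f O + rsum (fun k => f (S k)) n.
Proof. induction n. simpl; ring. rewrite rsum_S, IHn. simpl. ring. Qed.

Lemma pdiv_rsum (P Q : set (R * R) -> R) parts :
  partition_div P Q parts = rsum (fun k => div_term (P (Cn parts k)) (Q (Cn parts k))) (length parts).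
Proof. induction parts. reflexivity. simpl length. rewrite rsum_shift. simpl. rewrite IHparts. unfold Cn. reflexivity. Qed.

Lemma Cn_disj parts i j x : is_partition borel2 parts -> (i < length parts)%nat -> (j < length parts)%nat ->
  Cn parts i x -> Cn parts j x -> i = j.
Proof. intros [_ [_ H]] Hi Hj H1 H2. destruct (Nat.eq_dec i j); auto. exfalso; eapply H; eauto. Qed.

Lemma Cn_cover parts x : is_partition borel2 parts -> exists k, (k < length parts)%nat /\ Cn parts k x.
Proof. intros [_ [H _]]. apply H. Qed.

Section Add.
Context (mu : set (R * R) -> R) (Hmu : is_probability borel2 mu).
Let HS := borel_sa dist2.

Lemma add_parts parts Sset : is_partition borel2 parts -> borel2 Sset ->
  mu Sset = rsum (fun k => mu (fun p => Sset p /\ Cn parts k p)) (length parts).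
Proof using Hmu. intros Hp HSb. apply (m_part _ HS _ Hmu); auto.
 intros; apply Cn_borel; auto. intros; apply Cn_cover; auto. intros; eapply Cn_disj; eauto. Qed.

Lemma add_grid a b h N Sset : 0 < h -> borel2 Sset ->
  mu Sset = rsum (fun j => rsum (fun l => mu (fun p => Sset p /\ cell a b h N j l p)) (S (S N))) (S (S N)).
Proof using Hmu. intros Hh HSb. destruct (ival_part a h N Hh) as [Ca Ua]. destruct (ival_part b h N Hh) as [Cb Ub].
 rewrite (m_part _ HS _ Hmu (fun j p => ival a h N j (fst p)) (S (S N)) Sset).
 apply rsum_ext. intros j Hj.
 rewrite (m_part _ HS _ Hmu (fun l p => ival b h N l (snd p)) (S (S N))).
 apply rsum_ext. intros l Hl. apply mext. unfold cell. intros p; tauto.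
 all: first [ intros; apply borel2_snd, ival_borel | intros; apply borel2_fst, ival_borel | intros; apply Cb | intros; apply Ca
   | intros ? ? ? _ _ HH1 HH2; first [exact (Ua _ _ _ HH1 HH2) | exact (Ub _ _ _ HH1 HH2)]
   | apply (sa_inter HS); [exact HSb | apply borel2_fst, ival_borel] | exact HSb ]. Qed.

Lemma relabel parts a b h N kap (g : nat -> R) G0 : is_partition borel2 parts -> 0 < h ->
  (forall j l, (kap j l < length parts)%nat) -> (forall k, (k < length parts)%nat -> Rabs (g k) <= G0) ->
  Rabs (rsum (fun j => rsum (fun l => g (kap j l) * mu (cell a b h N j l)) (S (S N))) (S (S N)) -
        rsum (fun k => g k * mu (Cn parts k)) (length parts)) <= 2 * G0 * mu (Bad parts a b h N kap).
Proof using Hmu. intros Hp Hh Hk Hg. set (K := length parts). set (G := S (S N)).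
 set (T := fun j l k => mu (fun p => cell a b h N j l p /\ Cn parts k p)).
 assert (E1 : forall j l, mu (cell a b h N j l) = rsum (fun k => T j l k) K).
 { intros; apply add_parts; auto. apply cell_borel. }
 assert (E2 : forall k, mu (Cn parts k) = rsum (fun j => rsum (fun l => T j l k) G) G).
 { intros k. rewrite (add_grid a b h N); auto. apply rsum_ext; intros; apply rsum_ext; intros.
   unfold T; apply mext; tauto. apply Cn_borel; auto. }
 assert (HB := Bad_borel parts a b h N kap Hh Hp).
 assert (E3 : mu (Bad parts a b h N kap) = rsum (fun j => rsum (fun l =>
    rsum (fun k => mu (fun p => (Bad parts a b h N kap p /\ cell a b h N j l p) /\ Cn parts k p)) K) G) G).
 { rewrite (add_grid a b h N); auto. apply rsum_ext; intros; apply rsum_ext; intros.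
   apply add_parts; auto. apply sa_inter; auto. apply cell_borel. }
 assert (LHS : rsum (fun j => rsum (fun l => g (kap j l) * mu (cell a b h N j l)) G) G -
     rsum (fun k => g k * mu (Cn parts k)) K =
     rsum (fun j => rsum (fun l => rsum (fun k => (g (kap j l) - g k) * T j l k) K) G) G).
 { assert (rsum (fun k => g k * mu (Cn parts k)) K =
     rsum (fun j => rsum (fun l => rsum (fun k => g k * T j l k) K) G) G).
   { rewrite (rsum_ext _ (fun k => rsum (fun j => rsum (fun l => g k * T j l k) G) G)).
     rewrite rsum_swap. apply rsum_ext; intros. rewrite rsum_swap. auto.
     intros k _. rewrite E2, <- rsum_scal. apply rsum_ext; intros. rewrite <- rsum_scal; auto. }
   rewrite H, <- rsum_minus. apply rsum_ext; intros j _. rewrite <- rsum_minus. apply rsum_ext; intros l _.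
   rewrite E1, <- rsum_scal, <- rsum_minus. apply rsum_ext; intros; ring. }
 rewrite LHS, E3. rewrite <- rsum_scal.
 eapply Rle_trans. apply rsum_abs. apply rsum_le. intros j Hj.
 rewrite <- rsum_scal. eapply Rle_trans. apply rsum_abs. apply rsum_le. intros l Hl.
 rewrite <- rsum_scal. eapply Rle_trans. apply rsum_abs. apply rsum_le. intros k Hkk.
 destruct (Nat.eq_dec k (kap j l)) as [->|Hne].
 - rewrite Rminus_diag, Rmult_0_l, Rabs_R0. apply Rmult_le_pos.
   assert (0 <= G0). { eapply Rle_trans. apply Rabs_pos. apply (Hg (kap j l)); auto. } lra.
   apply (m_nonneg HS Hmu). apply sa_inter; auto. apply sa_inter; auto. apply cell_borel. apply Cn_borel; auto.
 - assert (ET : T j l k = mu (fun p => (Bad parts a b h N kap p /\ cell a b h N j l p) /\ Cn parts k p)).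
   { unfold T. apply mext. intros p; split; [|tauto]. intros [Hc Hcn]. split; auto. split; auto.
     unfold Bad. destruct Hc as [Hc1 Hc2]. rewrite (idx_eq _ _ _ _ _ Hh Hc1), (idx_eq _ _ _ _ _ Hh Hc2).
     intros Hk2. apply Hne. eapply Cn_disj; eauto. }
   rewrite ET, Rabs_mult. rewrite (Rabs_right (mu _)). apply Rmult_le_compat_r.
   apply (m_nonneg HS Hmu). apply sa_inter; auto. apply sa_inter; auto. apply cell_borel. apply Cn_borel; auto.
   eapply Rle_trans. apply Rabs_triang. rewrite Rabs_Ropp. assert (Rabs (g (kap j l)) <= G0) by auto.
   assert (Rabs (g k) <= G0) by auto. lra.
   apply Rle_ge, (m_nonneg HS Hmu). apply sa_inter; auto. apply sa_inter; auto. apply cell_borel. apply Cn_borel; auto. Qed.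
End Add.

Lemma regroup_pt a b h N (f : nat -> nat -> R) u v : 0 < h ->
  rsum (fun j => rsum (fun l => f j l * ind (cell a b h N j l) (u, v)) (S (S N))) (S (S N)) =
  f (idx a h N u) (idx b h N v).
Proof. intros Hh. assert (Hx := idx_spec a h N u Hh). assert (Hy := idx_spec b h N v Hh).
 rewrite (rsum_single _ _ (idx a h N u)).
 rewrite (rsum_single _ _ (idx b h N v)). rewrite ind_true. ring. split; auto.
 eapply ival_range; eauto.
 intros l _ Hl. rewrite ind_false. ring. intros [_ H2]. apply Hl. symmetry; apply idx_eq; auto.
 eapply ival_range; eauto.
 intros j _ Hj. rewrite (rsum_ext _ (fun _ => 0)). rewrite rsum_const; ring. intros l _. rewrite ind_false. ring.
 intros [H1 _]. apply Hj. symmetry; apply idx_eq; auto. Qed.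

Lemma regroup a b h N n (x y : nat -> R) (f : nat -> nat -> R) : 0 < h -> (1 <= n)%nat ->
  rsum (fun i => f (idx a h N (x i)) (idx b h N (y i))) n =
  INR n * rsum (fun j => rsum (fun l => f j l * empirical n (fun i => (x i, y i)) (cell a b h N j l)) (S (S N))) (S (S N)).
Proof. intros Hh Hn. unfold empirical.
 assert (E : rsum (fun j => rsum (fun l => f j l * (/ INR n * rsum (fun i => ind (cell a b h N j l) (x i, y i)) n)) (S (S N))) (S (S N))
   = / INR n * rsum (fun i => rsum (fun j => rsum (fun l => f j l * ind (cell a b h N j l) (x i, y i)) (S (S N))) (S (S N))) n).
 { transitivity (rsum (fun j => rsum (fun i => / INR n * rsum (fun l => f j l * ind (cell a b h N j l) (x i, y i)) (S (S N))) n) (S (S N))).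
   - apply rsum_ext; intros j _.
     transitivity (rsum (fun l => rsum (fun i => / INR n * (f j l * ind (cell a b h N j l) (x i, y i))) n) (S (S N))).
     apply rsum_ext; intros l _. rewrite rsum_scal, rsum_scal. ring.
     rewrite rsum_swap. apply rsum_ext; intros i _. rewrite <- rsum_scal. auto.
   - rewrite rsum_swap. rewrite <- rsum_scal. apply rsum_ext; intros i _. rewrite <- rsum_scal. auto. }
 rewrite E, <- Rmult_assoc, Rinv_r, Rmult_1_l by (apply not_0_INR; lia).
 apply rsum_ext. intros i _. rewrite regroup_pt; auto. Qed.


Lemma rprod_mult f g n : rprod (fun i => f i * g i) n = rprod f n * rprod g n.
Proof. induction n; simpl. ring. rewrite IHn. ring. Qed.

Lemma dsum_diff (f p q : nat -> nat -> R) G Fb tau :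
  (forall j l, (j < G)%nat -> (l < G)%nat -> Rabs (f j l) <= Fb /\ Rabs (q j l - p j l) <= tau) ->
  Rabs (rsum (fun j => rsum (fun l => f j l * q j l) G) G - rsum (fun j => rsum (fun l => f j l * p j l) G) G)
  <= INR G * INR G * (Fb * tau).
Proof. intros H. rewrite <- rsum_minus. eapply Rle_trans. apply rsum_abs.
 rewrite Rmult_assoc, <- rsum_const. apply rsum_le. intros j Hj.
 rewrite <- rsum_minus. eapply Rle_trans. apply rsum_abs. rewrite <- rsum_const. apply rsum_le. intros l Hl.
 destruct (H j l Hj Hl) as [H1 H2].
 replace (f j l * q j l - f j l * p j l) with (f j l * (q j l - p j l)) by ring. rewrite Rabs_mult.
 apply Rmult_le_compat; auto; apply Rabs_pos. Qed.

Lemma ival_total (mu : set R -> R) (Hmu : is_probability borel1 mu) a h N : 0 < h ->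
  rsum (fun j => mu (ival a h N j)) (S (S N)) = 1.
Proof. intros Hh. destruct (ival_part a h N Hh) as [Ca Ua].
 rewrite <- (m_T (borel_sa dist1) Hmu). rewrite (m_part _ (borel_sa dist1) _ Hmu (ival a h N) (S (S N)) (fun _ => True)).
 apply rsum_ext; intros. apply mext; tauto.
 intros; apply ival_borel. auto. intros x i j _ _; apply Ua. apply sa_T, borel_sa. Qed.

Section Chernoff.
Context (Omega : Type) (F : set Omega -> Prop) (HF : is_sigma_algebra F)
  (Pr : set Omega -> R) (HPr : is_probability F Pr)
  (PZ : set R -> R) (HPZ : is_probability borel1 PZ) (Z : nat -> Omega -> R)
  (HZmeas : forall i B, borel1 B -> F (fun w => B (Z i w)))
  (HZiid : forall (n : nat) (B : nat -> set R), (forall i, borel1 (B i)) ->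
      Pr (fun w => forall i, (i < n)%nat -> B i (Z i w)) = rprod (fun i => PZ (B i)) n)
  (a h : R) (N : nat) (Hh : 0 < h).

Lemma chernoff n (lam : nat -> nat -> R) (ly : nat -> nat) thr :
  F (fun w => INR n * thr <= rsum (fun i => lam (jv Omega Z a h N w i) (ly i)) n) /\
  Pr (fun w => INR n * thr <= rsum (fun i => lam (jv Omega Z a h N w i) (ly i)) n) <=
  rprod (fun i => rsum (fun j => PZ (ival a h N j) * exp (lam j (ly i) - thr)) (S (S N))) n.
Proof using HF HPr HPZ HZmeas HZiid Hh.
 set (Gd := fun s : nat -> nat => INR n * thr <= rsum (fun i => lam (s i) (ly i)) n).
 assert (HG : depends_on n Gd).
 { intros s s' Hs H. unfold Gd in *. rewrite (rsum_ext _ (fun i => lam (s i) (ly i))); auto.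
   intros k Hk; rewrite Hs; auto. }
 destruct (cyl_event Omega F HF Pr HPr PZ Z HZmeas HZiid a h N Hh n Gd HG) as [H1 H2].
 split; auto. unfold Gd in H2. rewrite H2.
 rewrite <- seqsum_prod. apply seqsum_le. intros s.
 assert (Hnn : 0 <= rprod (fun i => PZ (ival a h N (s i))) n).
 { apply rprod_nonneg; intros; apply (m_nonneg (borel_sa dist1) HPZ), ival_borel. }
 rewrite rprod_mult, rprod_exp. unfold ind. destruct excluded_middle_informative as [Hg|Hg].
 - rewrite Rmult_1_l. rewrite <- (Rmult_1_r (rprod _ n)) at 1. apply Rmult_le_compat_l; auto.
   rewrite rsum_minus, rsum_const. assert (HH := exp_ineq1_le (rsum (fun i => lam (s i) (ly i)) n - INR n * thr)). lra.
 - rewrite Rmult_0_l. apply Rmult_le_pos; auto. apply Rlt_le, exp_pos. Qed.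
End Chernoff.

Lemma abs_le_inv x a : Rabs x <= a -> - a <= x <= a.
Proof. unfold Rabs; destruct Rcase_abs; intros; lra. Qed.


Theorem mainTheorem6
  (PXY : set (R * R) -> R) (PZ : set R -> R)
  (HPXY : is_probability borel2 PXY) (HPZ : is_probability borel1 PZ)
  (* P_Y: the second marginal of P_XY *)
  (PY : set R -> R) (HPY : forall B, PY B = PXY (fun p => B (snd p)))
  (* P_Z P_Y: the product probability measure on R^2 *)
  (PZPY : set (R * R) -> R) (HPZPY : is_probability borel2 PZPY)
  (HPZPYrect : forall A B, borel1 A -> borel1 B ->
      PZPY (fun p => A (fst p) /\ B (snd p)) = PZ A * PY B)
  (* D(P_XY || P_Z P_Y) = D < infinity *)
  (D : R) (HD : divergence_is borel2 PXY PZPY D)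
  (* Z_1, Z_2, ... i.i.d. P_Z on a probability space (Omega, F, Pr) *)
  (Omega : Type) (F : set Omega -> Prop) (HF : is_sigma_algebra F)
  (Pr : set Omega -> R) (HPr : is_probability F Pr)
  (Z : nat -> Omega -> R)
  (HZmeas : forall i B, borel1 B -> F (fun w => B (Z i w)))
  (HZiid : forall (n : nat) (B : nat -> set R), (forall i, borel1 (B i)) ->
      Pr (fun w => forall i, (i < n)%nat -> B i (Z i w)) = rprod (fun i => PZ (B i)) n) :
  forall delta, 0 < delta ->
  exists eps0, 0 < eps0 /\
  forall eps, 0 < eps -> eps < eps0 ->
  forall y : nat -> nat -> R,
    (forall n, (1 <= n)%nat -> typical_Y PY eps n (y n)) ->
    log_rate_limsup_le
      (fun n => Pr (fun w => typical_XY PXY eps n (fun i => Z i w) (y n)))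
      (- D + delta).
Proof.
 intros delta Hdelta.
 assert (HS2 := borel_sa dist2). assert (HS1 := borel_sa dist1).
 destruct HD as [HDpos HDlub].
 assert (Hex : exists parts, is_partition borel2 parts /\ D - delta / 4 < partition_div PXY PZPY parts).
 { apply NNPP; intros Hn. assert (D <= D - delta / 4). apply HDlub. intros s [parts [Hp ->]].
   apply Rnot_lt_le; intros Hl; apply Hn; eauto. lra. }
 destruct Hex as [parts [Hp Hdiv]].
 set (K := length parts).
 set (pk := fun k => PXY (Cn parts k)). set (rk := fun k => PZPY (Cn parts k)).
 assert (Hpk0 : forall k, 0 <= pk k) by (intros; apply (m_nonneg HS2 HPXY), Cn_borel; auto).
 assert (Hrk0 : forall k, 0 <= rk k) by (intros; apply (m_nonneg HS2 HPZPY), Cn_borel; auto).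
 set (lam0 := ln (delta / 8)).
 set (lamk := fun k => if Req_EM_T (pk k) 0 then lam0 else ln (pk k / rk k)).
 set (Lam := rsum (fun k => Rabs (lamk k)) K).
 assert (HLam : forall k, (k < K)%nat -> Rabs (lamk k) <= Lam).
 { intros k Hk. apply (rsum_term (fun k => Rabs (lamk k))); auto. intros; apply Rabs_pos. }
 assert (HLam0 : 0 <= Lam) by (apply rsum_nonneg; intros; apply Rabs_pos).
 assert (Hsum1 : rsum (fun k => lamk k * pk k) K = partition_div PXY PZPY parts).
 { rewrite pdiv_rsum. apply rsum_ext. intros k _. unfold lamk, div_term. fold (pk k) (rk k).
   destruct (Req_EM_T (pk k) 0) as [E|E]. rewrite E; ring. ring. }
 assert (Htot : forall mu, is_probability borel2 mu -> rsum (fun k => mu (Cn parts k)) K = 1).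
 { intros mu Hmu. rewrite <- (m_T HS2 Hmu). rewrite (add_parts mu Hmu parts (fun _ => True)); auto.
   apply rsum_ext; intros; apply mext; tauto. apply sa_T; auto. }
 assert (Hsum2 : rsum (fun k => exp (lamk k) * rk k) K <= 1 + delta / 8).
 { assert (rsum (fun k => exp (lamk k) * rk k) K <= rsum (fun k => pk k + delta / 8 * rk k) K).
   { apply rsum_le. intros k Hk. unfold lamk. destruct (Req_EM_T (pk k) 0) as [E|E].
     - unfold lam0. rewrite exp_ln by lra. rewrite E. lra.
     - assert (Hp0 : 0 < pk k) by (destruct (Hpk0 k); auto; congruence).
       assert (Hr0 : 0 < rk k). { apply (HDpos parts Hp). unfold Cn; apply nth_In; auto. auto. }
       rewrite exp_ln. field_simplify; [|lra]. assert (0 <= delta / 8 * rk k) by (apply Rmult_le_pos; auto; lra). lra.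
       apply Rdiv_lt_0_compat; auto. }
   rewrite rsum_plus, rsum_scal in H. assert (E1 := Htot PXY HPXY). assert (E2 := Htot PZPY HPZPY). fold K in E1, E2. unfold pk, rk in H. rewrite E1, E2 in H. unfold rk. lra. }
 set (C1 := exp Lam + Lam + 1).
 assert (HC1 : 1 <= C1). { unfold C1. assert (H := exp_pos Lam). lra. }
 set (eta1 := delta / (8 * C1)).
 assert (Heta1 : 0 < eta1) by (unfold eta1; apply Rdiv_lt_0_compat; lra).
 destruct (part_label PXY PZPY HPXY HPZPY parts Hp eta1 Heta1) as [h [L0 [Hh Hlab]]].
 set (L1 := Rabs L0).
 destruct (nat_above ((2 * L1 + 2 * h) / h)) as [N HN].
 assert (HNh : 2 * L1 + 2 * h < INR N * h).
 { apply (Rmult_lt_compat_r h) in HN; auto. unfold Rdiv in HN. rewrite Rmult_assoc, Rinv_l in HN; lra. }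
 set (G := S (S N)). set (GG := INR G * INR G).
 assert (HGG : 1 <= GG). { unfold GG, G. rewrite !S_INR. assert (H := pos_INR N). nra. }
 destruct (nat_above (16 * C1 * GG / delta)) as [M0 HM0].
 set (M := S M0). assert (HM : (1 <= M)%nat) by (unfold M; lia).
 assert (HMp : 0 < INR M) by (apply lt_0_INR; lia).
 assert (HM16 : 2 * C1 * GG / INR M <= delta / 8).
 { assert (INR M0 < INR M) by (unfold M; rewrite S_INR; lra).
   assert (16 * C1 * GG < delta * INR M).
   { apply (Rmult_lt_compat_r delta) in HM0; auto. unfold Rdiv in HM0. rewrite Rmult_assoc, Rinv_l in HM0; nra. }
   apply (Rmult_le_reg_r (INR M)); auto. unfold Rdiv. rewrite Rmult_assoc, Rinv_l by lra. nra. }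
 set (a0 := - L1 - h).
 destruct (strip_select _ (marg_fst PXY HPXY) a0 h N M Hh HM) as [ma [Hma Hsa]].
 destruct (strip_select _ (marg_snd PXY HPXY) a0 h N M Hh HM) as [mb [Hmb Hsb]].
 set (a := a0 + INR ma * h / INR M). set (b := a0 + INR mb * h / INR M). set (w := h / (3 * INR M)).
 assert (Hw : 0 < w) by (unfold w; apply Rdiv_lt_0_compat; lra).
 assert (Hshift : forall m, (m < M)%nat -> 0 <= INR m * h / INR M < h).
 { intros m Hm. assert (INR m < INR M) by (apply lt_INR; auto). assert (0 <= INR m) by apply pos_INR.
   split. apply Rmult_le_pos; [apply Rmult_le_pos; lra|apply Rlt_le, Rinv_0_lt_compat; lra].
   apply (Rmult_lt_reg_r (INR M)); auto. unfold Rdiv. rewrite Rmult_assoc, Rinv_l by lra. nra. }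
 assert (HL1 : L0 <= L1 /\ - L1 <= L0) by (unfold L1, Rabs; destruct Rcase_abs; lra).
 assert (Hgrid : gridok h L0 a b h N).
 { destruct (Hshift ma Hma). destruct (Hshift mb Hmb). unfold gridok, a, b, a0. repeat split; lra. }
 destruct (Hlab a b h N Hgrid) as [kap [Hkap HBad]].
 assert (HBadP : 0 <= PXY (Bad parts a b h N kap)) by (apply (m_nonneg HS2 HPXY), Bad_borel; auto).
 assert (HBadQ : 0 <= PZPY (Bad parts a b h N kap)) by (apply (m_nonneg HS2 HPZPY), Bad_borel; auto).
 assert (Hstrip : PXY (strip a b h N w) <= 2 / INR M).
 { unfold strip. eapply Rle_trans. apply (m_sub2 HS2 HPXY). apply borel2_fst, nearline_borel. apply borel2_snd, nearline_borel.
   cbv beta in Hsa, Hsb. fold a b w in Hsa, Hsb. unfold Rdiv in *. lra. }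
 set (lam := fun j l => lamk (kap j l)).
 assert (Hlam : forall j l, Rabs (lam j l) <= Lam) by (intros; apply HLam; auto).
 set (eps1 := delta / (16 * C1 * GG)).
 assert (Heps1 : 0 < eps1) by (unfold eps1; apply Rdiv_lt_0_compat; nra).
 exists (Rmin w eps1). split. apply Rmin_glb_lt; auto.
 intros eps Heps Heps0 y _ eta Heta. exists 1%nat. intros n _ Hn1.
 assert (Hepsw : eps < w) by (eapply Rlt_le_trans; [apply Heps0|apply Rmin_l]).
 assert (Heps1' : eps < eps1) by (eapply Rlt_le_trans; [apply Heps0|apply Rmin_r]).
 set (Ev := fun w => typical_XY PXY eps n (fun i => Z i w) (y n)).
 fold Ev.
 assert (HEv : F Ev).
 { apply (open_event Omega F HF Pr HPr PZ Z HZmeas HZiid n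
     (fun z => prokhorov_lt dist2 (empirical n (fun i => (z i, y n i))) PXY eps)).
   intros z Hz. apply plt_iff in Hz. destruct Hz as [e [He Hok]].
   exists ((eps - e) / 2). split. lra. intros z' Hz'. apply plt_iff. exists (e + (eps - e) / 2). split. lra.
   apply (ok_shift PXY HPXY n (fun i => (z i, y n i))); auto. lra.
   intros i Hi. rewrite dist2_same_snd. rewrite Rabs_minus_sym. auto. }
 destruct (Req_dec (Pr Ev) 0) as [H0|Hne]. left; auto. right.
 assert (HPE : 0 < Pr Ev) by (destruct (m_nonneg HF HPr Ev HEv); auto; congruence).
 assert (Hw0 : exists w0, Ev w0).
 { apply NNPP; intros Hn. apply Hne. rewrite (mext Pr Ev (fun _ => False)). apply (m_empty HF HPr).
   intros x; split; [intros Hx; apply Hn; eauto|tauto]. }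
 destruct Hw0 as [w0 Hw0].
 set (tau := 2 / INR M + eps).
 set (q := fun w j l => empirical n (fun i => (Z i w, y n i)) (cell a b h N j l)).
 set (pc := fun j l => PXY (cell a b h N j l)).
 assert (Hclose : forall w, Ev w -> forall j l, Rabs (q w j l - pc j l) <= tau).
 { intros w1 Hw1 j l. apply plt_iff in Hw1. destruct Hw1 as [e [He Hok]].
   eapply Rle_trans. apply (cell_close PXY HPXY n _ a b h N j l e w); auto. lra.
   unfold tau. lra. }
 set (Aval := rsum (fun j => rsum (fun l => lam j l * pc j l) G) G).
 assert (HA : rsum (fun k => lamk k * pk k) K - 2 * Lam * PXY (Bad parts a b h N kap) <= Aval).
 { assert (H := relabel PXY HPXY parts a b h N kap lamk Lam Hp Hh Hkap HLam).
   apply abs_le_inv in H. unfold Aval, lam, pc, pk. fold K G in H. lra. }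
 set (phi := fun l => rsum (fun j => PZ (ival a h N j) * exp (lam j l)) G).
 assert (HPZtot := ival_total PZ HPZ a h N Hh). fold G in HPZtot.
 assert (HPZj : forall j, 0 <= PZ (ival a h N j)) by (intros; apply (m_nonneg HS1 HPZ), ival_borel).
 assert (Hphi : forall l, 0 <= phi l <= exp Lam).
 { intros l. split. apply rsum_nonneg; intros; apply Rmult_le_pos; auto. apply Rlt_le, exp_pos.
   unfold phi. rewrite <- (Rmult_1_r (exp Lam)), <- HPZtot, <- rsum_scal. apply rsum_le. intros j _.
   rewrite (Rmult_comm (exp Lam)). apply Rmult_le_compat_l; auto. 
   assert (lam j l <= Lam) by (assert (H := Hlam j l); unfold Rabs in H; destruct Rcase_abs in H; lra).
   destruct (Req_dec (lam j l) Lam) as [->|]; [lra|]. apply Rlt_le, exp_increasing; lra. }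
 set (Bval := rsum (fun j => rsum (fun l => phi l * pc j l) G) G).
 assert (HB : Bval <= rsum (fun k => exp (lamk k) * rk k) K + 2 * exp Lam * PZPY (Bad parts a b h N kap)).
 { assert (EB : Bval = rsum (fun j => rsum (fun l => exp (lam j l) * PZPY (cell a b h N j l)) G) G).
   { unfold Bval. rewrite rsum_swap.
     assert (EY : forall l, rsum (fun j => pc j l) G = PY (ival b h N l)).
     { intros l. rewrite HPY. destruct (ival_part a h N Hh) as [Ca Ua].
       rewrite (m_part _ HS2 _ HPXY (fun j p => ival a h N j (fst p)) G).
       apply rsum_ext; intros; unfold pc, cell; apply mext; tauto.
       intros; apply borel2_fst, ival_borel. intros; apply Ca. intros x i j _ _; apply Ua. apply borel2_snd, ival_borel. }
     rewrite (rsum_ext _ (fun l => phi l * PY (ival b h N l))).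
     unfold phi. rewrite (rsum_ext _ (fun l => rsum (fun j => exp (lam j l) * PZPY (cell a b h N j l)) G)).
     apply rsum_swap.
     intros l _. rewrite Rmult_comm, <- rsum_scal. apply rsum_ext; intros j _. unfold cell.
     rewrite HPZPYrect by apply ival_borel. ring.
     intros l _. rewrite <- EY, <- rsum_scal. auto. }
   assert (H := relabel PZPY HPZPY parts a b h N kap (fun k => exp (lamk k)) (exp Lam) Hp Hh Hkap).
   assert (H' : forall k, (k < length parts)%nat -> Rabs (exp (lamk k)) <= exp Lam).
   { intros k Hk. rewrite Rabs_right by (apply Rle_ge, Rlt_le, exp_pos).
     assert (lamk k <= Lam) by (assert (H1 := HLam k Hk); unfold Rabs in H1; destruct Rcase_abs in H1; lra).
     destruct (Req_dec (lamk k) Lam) as [->|]; [lra|]. apply Rlt_le, exp_increasing; lra. }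
   specialize (H H'). apply abs_le_inv in H. rewrite EB. unfold rk. fold K G in H. unfold lam. lra. }
 set (thr := Aval - Lam * GG * tau).
 set (ly := fun i => idx b h N (y n i)).
 destruct (chernoff Omega F HF Pr HPr PZ HPZ Z HZmeas HZiid a h N Hh n lam ly thr) as [HGF HGP].
 assert (Hsub : forall w1, Ev w1 -> INR n * thr <= rsum (fun i => lam (jv Omega Z a h N w1 i) (ly i)) n).
 { intros w1 Hw1. unfold jv, ly. rewrite (regroup a b h N n (fun i => Z i w1) (y n) lam Hh Hn1).
   apply Rmult_le_compat_l. apply pos_INR.
   assert (Hd := dsum_diff lam pc (q w1) G Lam tau). 
   assert (H : Rabs (rsum (fun j => rsum (fun l => lam j l * q w1 j l) G) G - Aval) <= GG * (Lam * tau)).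
   { apply Hd. intros; split; auto. }
   apply abs_le_inv in H. unfold thr, q in *. unfold GG in *. fold G. lra. }
 assert (HPE2 : Pr Ev <= rprod (fun i => rsum (fun j => PZ (ival a h N j) * exp (lam j (ly i) - thr)) G) n).
 { eapply Rle_trans; [|apply HGP]. apply (m_mono HF HPr); auto. }
 assert (HPE3 : Pr Ev <= exp (rsum (fun i => phi (ly i)) n - INR n - INR n * thr)).
 { eapply Rle_trans. apply HPE2.
   replace (rsum (fun i => phi (ly i)) n - INR n - INR n * thr) with (rsum (fun i => phi (ly i) - 1 - thr) n)
     by (rewrite !rsum_minus, !rsum_const; ring).
   rewrite <- rprod_exp. apply rprod_le. intros i _.
   assert (Ei : rsum (fun j => PZ (ival a h N j) * exp (lam j (ly i) - thr)) G = phi (ly i) * exp (- thr)).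
   { unfold phi. rewrite Rmult_comm, <- rsum_scal. apply rsum_ext; intros. unfold Rminus. rewrite exp_plus. ring. }
   rewrite Ei. split. apply Rmult_le_pos. apply Hphi. apply Rlt_le, exp_pos.
   replace (phi (ly i) - 1 - thr) with ((phi (ly i) - 1) + - thr) by ring. rewrite exp_plus.
   apply Rmult_le_compat_r. apply Rlt_le, exp_pos. assert (H := exp_ineq1_le (phi (ly i) - 1)). lra. }
 assert (Hphisum : rsum (fun i => phi (ly i)) n <= INR n * (Bval + GG * (exp Lam * tau))).
 { unfold ly. rewrite (regroup a b h N n (fun i => Z i w0) (y n) (fun j l => phi l) Hh Hn1).
   apply Rmult_le_compat_l. apply pos_INR.
   assert (Hd := dsum_diff (fun j l => phi l) pc (q w0) G (exp Lam) tau).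
   assert (H : Rabs (rsum (fun j => rsum (fun l => phi l * q w0 j l) G) G - Bval) <= GG * (exp Lam * tau)).
   { apply Hd. intros; split; auto. rewrite Rabs_right by (apply Rle_ge, Hphi). apply Hphi. }
   apply abs_le_inv in H. unfold q in *. fold G. lra. }
 assert (Hlog : ln (Pr Ev) <= INR n * (Bval + GG * (exp Lam * tau)) - INR n - INR n * thr).
 { assert (X : ln (Pr Ev) <= rsum (fun i => phi (ly i)) n - INR n - INR n * thr).
   { destruct (Rle_lt_or_eq_dec _ _ HPE3) as [Hl|He].
     - rewrite <- (ln_exp (rsum (fun i => phi (ly i)) n - INR n - INR n * thr)). apply Rlt_le, ln_increasing; auto.
     - rewrite He, ln_exp. lra. }
   lra. }
 assert (HnP : 0 < INR n) by (apply lt_0_INR; lia).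
 assert (Hfin : Bval + GG * (exp Lam * tau) - 1 - thr <= - D + delta).
 { unfold thr. rewrite Hsum1 in HA.
   assert (HBad2 : 2 * exp Lam * PZPY (Bad parts a b h N kap) + 2 * Lam * PXY (Bad parts a b h N kap) <= delta / 4).
   { assert (2 * exp Lam * PZPY (Bad parts a b h N kap) + 2 * Lam * PXY (Bad parts a b h N kap) <=
       2 * C1 * (PXY (Bad parts a b h N kap) + PZPY (Bad parts a b h N kap))).
     { unfold C1. assert (H := exp_pos Lam). nra. }
     assert (2 * C1 * (PXY (Bad parts a b h N kap) + PZPY (Bad parts a b h N kap)) <= 2 * C1 * eta1).
     { apply Rmult_le_compat_l; lra. }
     assert (2 * C1 * eta1 = delta / 4) by (unfold eta1; field; lra). lra. }
   assert (Htau : GG * (exp Lam * tau) + Lam * GG * tau <= C1 * GG * tau).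
   { unfold C1. assert (0 <= tau) by (unfold tau; assert (0 < 2 / INR M) by (apply Rdiv_lt_0_compat; lra); lra). nra. }
   assert (Htau2 : C1 * GG * tau <= delta / 8 + delta / 16).
   { unfold tau. rewrite Rmult_plus_distr_l.
     assert (C1 * GG * (2 / INR M) = 2 * C1 * GG / INR M) by (field; lra).
     assert (C1 * GG * eps <= delta / 16).
     { assert (C1 * GG * eps1 = delta / 16) by (unfold eps1; field; nra).
       assert (0 < C1 * GG) by nra. nra. }
     lra. }
   lra. }
 apply (Rmult_le_compat_l (INR n)) in Hfin; [|lra].
 unfold Rdiv. apply (Rmult_le_reg_l (INR n)); auto.
 rewrite (Rmult_comm (ln _)), <- Rmult_assoc, Rinv_r, Rmult_1_l by lra.
 assert (0 <= INR n * eta) by nra. nra. Qed.
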